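(* In the blowup/base-change setting below, fix $p\in\{0,\dots,P-1\}$. Write $\Delta'=\sum_{m=1}^Nc_mM_m$ with $c_m\in\mathbb C^*$ and distinct monomials $M_m=t^{\tau_m}\big(\prod_{q=0}^Pe_q^{\epsilon_{q,m}}\big)s^{\sigma_m}$. Define $\epsilon_p^{(0)}:=\min\{\epsilon_{p,m}:\epsilon_{p+1,m}=0\}$ and $\epsilon_p^{(1)}:=\min\{\epsilon_{p+1,m}:\epsilon_{p,m}=0\}$, and for a positive integer $k$ define on $[0,k]$ the linear functions $\bar{\mathfrak L}_m(r):=(k-r)\epsilon_{p,m}+r\,\epsilon_{p+1,m}$ and $\bar{\mathfrak M}(r):=\min_{1\le m\le N}\bar{\mathfrak L}_m(r)$; let $\mathfrak M$ denote $\bar{\mathfrak M}$ for $k=1$, a function on $[0,1]$. (1) If there are special fibers at $B^{p,p+1}$, then $\epsilon_p^{(0)}>0$ and $\epsilon_p^{(1)}>0$. (2) $\bar n_{kp+r}=(k-r)n_p+r\,n_{p+1}+\bar{\mathfrak M}(r)$ for $r=0,1,\dots,k$. (3) $\bar{\mathfrak M}$ is piecewise linear and concave, $\bar{\mathfrak M}(kr)=k\,\mathfrak M(r)$ for $r\in[0,1]$, and $\mathfrak M(0)=\mathfrak M(1)=0$. The points $0<\mathcal R_1<\dots<\mathcal R_{\mathcal N-1}<1$ at which $\mathfrak M$ is not locally linear are rational numbers. (4) There are no special fibers at $\bar B^{\bar p,\bar p+1}$ for all $\bar p=kp,\dots,k(p+1)-1$ if and only if $k\mathcal R_\iota\in\mathbb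 Z$ for all $\iota=1,\dots,\mathcal N-1$, i.e. if and only if $k$ is a multiple of $k_0^{(p)}$, the smallest positive integer with this property (equal to the least common multiple of the denominators of the $\mathcal R_\iota$ in lowest terms).
   Context: Blowup setting. Let $f=f(s,t;u)$, $g=g(s,t;u)$ be complex polynomials, homogeneous in $(s,t)$ of degrees $8$ and $12$, defining a family of Weierstrass models $y^2=x^3+fxz^4+gz^6$ over $\mathbb P^1_{[s:t]}$ with parameter $u$; $\Delta:=4f^3+27g^2$. Let $a,b$ be the vanishing orders in $s$ at $s=0$ of $f,g$ for generic $u\ne0$ (not both $a\ge4$, $b\ge6$), and write $f=s^a\sum_i\mathcal F_i\,s^it^{8-a-i}$, $g=s^b\sum_j\mathcal G_j\,s^jt^{12-b-j}$. Assume the 3-fold vanishing orders of $(f,g,\Delta)$ at $(u,s)=(0,0)$ (largest $N$ with the function in $(u,s)^N$, $t=1$) are $(4+\alpha,6+\beta,12+\gamma)$ with $\alpha=0$ or $\beta=0$, and that this persists under all base changes $u\mapsto u^\ell$ (Classes 1–4). Blowup chain: $e_0:=u$; the $p$-th blowup substitutes $e_{p-1}\mapsto e_{p-1}e_p$, $s\mapsto se_p$ and divides $f,g,\Delta$ by $e_p^4,e_p^6,e_p^{12}$; $\mu_{q,i}$, $\nu_{q,j}$ are the vanishing orders in $e_q$ of the coefficients $\mathcal F_i(e_0,\dots)$, $\mathcal G_j(e_0,\dots)$; $P$ is the first number of blowups for which some $i<4-a$ with $\mathcal F_i\neq0$ has $\mu_{P,i}<4-a-i$ or some $j<6-b$ with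 $\mathcal G_j\ne0$ has $\nu_{P,j}<6-b-j$. Standing assumption: there is such an $i$ with $\mu_{P,i}=0$ or such a $j$ with $\nu_{P,j}=0$ (achievable by a preliminary base change). Base components $B^p=\{e_p=0\}$ form a chain, $B^{p,p+1}=\{e_p=e_{p+1}=0\}$. $n_p$ is the largest power of $e_p$ dividing $\Delta$ and $\Delta=\prod_qe_q^{n_q}\Delta'$. There is a special fiber at $B^{p,p+1}$ iff $\Delta'$ vanishes there, i.e. every monomial of $\Delta'$ is divisible by $e_p$ or $e_{p+1}$. Base change: for a positive integer $k$, the barred configuration $\bar{\mathcal Y}$ is obtained by substituting $u\mapsto u^k$ in $f,g$ and then performing the blowup chain, which now consists of $\bar P=kP$ blowups with coordinates $\bar e_0,\dots,\bar e_{\bar P}$; $\bar B^{\bar p}$, $\bar B^{\bar p,\bar p+1}$, $\bar n_{\bar p}$, $\bar\Delta'$ are defined analogously. *)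

(* Defs.v *)
From HB Require Import structures.
From mathcomp Require Import all_boot all_order all_algebra.
From mathcomp Require Import mpoly.
From mathcomp Require Import Rstruct.
From mathcomp.real_closed Require Import complex.

Set Implicit Arguments.
Unset Strict Implicit.
Unset Printing Implicit Defensive.

Import Order.TTheory GRing.Theory Num.Theory.
Local Open Scope ring_scope.

Notation RR := Rdefinitions.R.
Definition CC : numClosedFieldType := complex RR.

(* Conventions.  A polynomial "at stage p" (after p blowups) is an element   *)
(* of {mpoly CC[p.+3]} in the variables                                     *)
(*    X_0 = t,  X_1 = s,  X_(q+2) = e_q   (q = 0..p).                        *)
(* At stage 0 these are t, s, e_0 = u: the input polynomials f, g are       *)
(* elements of {mpoly CC[3]} in the variables (t, s, u).                     *)

Definition vt {n} : 'I_n.+3 := inord 0.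
Definition vs {n} : 'I_n.+3 := inord 1.
Definition ve {n} (q : nat) : 'I_n.+3 := inord q.+2.   (* e_q, for q <= n *)

(* minimum of a list of naturals (0 for the empty list) *)
Definition minseq (l : seq nat) : nat :=
  \big[minn/ \max_(x <- l) x]_(x <- l) x.

(* vanishing order in the variable v of a polynomial: minimal exponent of   *)
(* X_v over the monomials of its support (only used for nonzero h)          *)
Definition mord {n} (v : 'I_n) (h : {mpoly CC[n]}) : nat :=
  minseq [seq (m : 'X_{1..n}) v | m <- msupp h].

(* exact division by X_v ^ w (keeps the monomials divisible by X_v^w; it is *)
(* the exact quotient whenever X_v^w divides h)                             *)
Definition mdivX {n} (v : 'I_n) (w : nat) (h : {mpoly CC[n]}) : {mpoly CC[n]} :=
  \sum_(m <- msupp h | (w <= m v)%N) h@_m *: 'X_[(m - U_(v) *+ w)%MM].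

(* coefficient of s^i t^j of a stage polynomial, as a polynomial in the e_q *)
Definition stcoef {n} (h : {mpoly CC[n.+3]}) (i j : nat) : {mpoly CC[n.+3]} :=
  \sum_(m <- msupp h | (m vs == i) && (m vt == j))
     h@_m *: 'X_[(m - (U_(vs) *+ i + U_(vt) *+ j))%MM].

(* The substitution of the (p+1)-th blowup, from stage p to stage p+1:       *)
(*   e_p |-> e_p e_(p+1),  s |-> s e_(p+1),  other variables unchanged.      *)
Definition blowup_subst (p : nat) : (p.+3).-tuple {mpoly CC[p.+4]} :=
  [tuple (if (i : nat) == 1%N then 'X_(inord 1) * 'X_(inord p.+3)
          else if (i : nat) == p.+2 then 'X_(inord p.+2) * 'X_(inord p.+3)
          else 'X_(inord i)) | i < p.+3].

(* The blowup chain applied to a polynomial of weight w (w = 4, 6, 12 for   *)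
(* f, g, Delta): stage p+1 is obtained from stage p by the substitution     *)
(* above followed by division by e_(p+1)^w.                                  *)
Fixpoint bchain (w : nat) (h : {mpoly CC[3]}) (p : nat) : {mpoly CC[p.+3]} :=
  match p with
  | 0 => h
  | p'.+1 => mdivX (ve p'.+1) w (comp_mpoly (blowup_subst p') (bchain w h p'))
  end.

Definition Disc {n} (f g : {mpoly CC[n]}) : {mpoly CC[n]} :=
  4%:R * f ^+ 3 + 27%:R * g ^+ 2.

(* base change u |-> u^l on stage-0 polynomials (variables t, s, u) *)
Definition bchange (l : nat) (h : {mpoly CC[3]}) : {mpoly CC[3]} :=
  comp_mpoly [tuple (if (i : nat) == 2%N then 'X_i ^+ l else 'X_i) | i < 3] h.

Definition dehom (h : {mpoly CC[3]}) : {mpoly CC[3]} :=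
  comp_mpoly [tuple (if (i : nat) == 0%N then 1 else 'X_i) | i < 3] h.

(* h|_(t=1) lies in the ideal (u,s)^N (monomial criterion) *)
Definition us_ord_ge (h : {mpoly CC[3]}) (N : nat) : Prop :=
  forall m, m \in msupp (dehom h) -> (N <= m (inord 1 : 'I_3) + m (inord 2 : 'I_3))%N.

Definition us_ord_eq (h : {mpoly CC[3]}) (N : nat) : Prop :=
  us_ord_ge h N /\ ~ us_ord_ge h N.+1.

Definition st_homog (h : {mpoly CC[3]}) (d : nat) : Prop :=
  forall m, m \in msupp h -> (m vs + m vt = d)%N.

(* a, b : vanishing orders in s of f, g for generic u (min s-exponent). *)
Definition sord (h : {mpoly CC[3]}) : nat := mord vs h.

(* F_i after p blowups: f_p = s^a sum_i F_i s^i t^(8-a-i) *)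
Definition Fco (f : {mpoly CC[3]}) (p i : nat) : {mpoly CC[p.+3]} :=
  stcoef (bchain 4 f p) (sord f + i) (8 - sord f - i).
Definition Gco (g : {mpoly CC[3]}) (p j : nat) : {mpoly CC[p.+3]} :=
  stcoef (bchain 6 g p) (sord g + j) (12 - sord g - j).

(* mu_(q,i), nu_(q,j): vanishing order in e_q of the coefficients (computed *)
(* at stage q, where e_q is the newest exceptional coordinate)              *)
Definition mu (f : {mpoly CC[3]}) (q i : nat) : nat := mord (ve q) (Fco f q i).
Definition nu (g : {mpoly CC[3]}) (q j : nat) : nat := mord (ve q) (Gco g q j).

Definition condP (f g : {mpoly CC[3]}) (p : nat) : Prop :=
  (exists i, (i < 4 - sord f)%N /\ Fco f 0 i != 0 /\ (mu f p i < 4 - sord f - i)%N)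
  \/ (exists j, (j < 6 - sord g)%N /\ Gco g 0 j != 0 /\ (nu g p j < 6 - sord g - j)%N).

Definition Dfin (D : {mpoly CC[3]}) (Q : nat) : {mpoly CC[Q.+3]} := bchain 12 D Q.
Definition nord (D : {mpoly CC[3]}) (Q q : nat) : nat := mord (ve q) (Dfin D Q).
Definition Dprime (D : {mpoly CC[3]}) (Q : nat) : {mpoly CC[Q.+3]} :=
  foldr (fun q h => mdivX (ve q) (nord D Q q) h) (Dfin D Q) (iota 0 Q.+1).

(* special fiber at B^{p,p+1}: Delta' vanishes on e_p = e_(p+1) = 0, i.e.  *)
(* every monomial of Delta' is divisible by e_p or e_(p+1)                 *)
Definition special_fiber (D : {mpoly CC[3]}) (Q p : nat) : Prop :=
  forall m, m \in msupp (Dprime D Q) -> (0 < m (ve p))%N || (0 < m (ve p.+1))%N.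

Definition eps0 (D : {mpoly CC[3]}) (Q p : nat) : nat :=
  minseq [seq (m : 'X_{1..Q.+3}) (ve p) | m <- msupp (Dprime D Q) & (m : 'X_{1..Q.+3}) (ve p.+1) == 0%N].
Definition eps1 (D : {mpoly CC[3]}) (Q p : nat) : nat :=
  minseq [seq (m : 'X_{1..Q.+3}) (ve p.+1) | m <- msupp (Dprime D Q) & (m : 'X_{1..Q.+3}) (ve p) == 0%N].

(* minimum of a nonempty list of reals *)
Definition rminseq (l : seq RR) : RR := \big[Num.min/ head 0 l]_(x <- l) x.

Definition Mbar (D : {mpoly CC[3]}) (Q p k : nat) (r : RR) : RR :=
  rminseq [seq (k%:R - r) * ((m : 'X_{1..Q.+3}) (ve p))%:R + r * (m (ve p.+1))%:R
          | m <- msupp (Dprime D Q)].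

Definition piecewise_linear (F : RR -> RR) (x0 x1 : RR) : Prop :=
  exists xs : seq RR, [/\ head 0 xs = x0, last 0 xs = x1, sorted <%R xs &
    forall i, (i.+1 < size xs)%N -> exists a b : RR,
      forall x, nth 0 xs i <= x <= nth 0 xs i.+1 -> F x = a * x + b].

Definition concave_on (F : RR -> RR) (x0 x1 : RR) : Prop :=
  forall x y l : RR, x0 <= x <= x1 -> x0 <= y <= x1 -> 0 <= l <= 1 ->
    l * F x + (1 - l) * F y <= F (l * x + (1 - l) * y).

Definition not_locally_linear (F : RR -> RR) (r : RR) : Prop :=
  ~ (exists d : RR, 0 < d /\ exists a b : RR,
        forall x, `|x - r| < d -> F x = a * x + b).

(* Main.v *)
Require Import Defs.
From HB Require Import structures.
From mathcomp Require Import all_boot all_order all_algebra.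
From mathcomp Require Import mpoly.
From mathcomp Require Import Rstruct.
From mathcomp.real_closed Require Import complex.
From mathcomp Require Import ring lra zify.
From Stdlib Require Import FunctionalExtensionality.
Import Order.TTheory GRing.Theory Num.Theory.
Local Open Scope ring_scope.
Set Implicit Arguments.
Unset Strict Implicit.
Unset Printing Implicit Defensive.
Definition mimg {n n'} (phi : 'X_{1..n} -> 'X_{1..n'}) (h : {mpoly CC[n]}) : {mpoly CC[n']} :=
  \sum_(m <- msupp h) h@_m *: 'X_[phi m].

Section Mimg.
Variables (n n' : nat).
Implicit Types (h : {mpoly CC[n]}).

Lemma mimg_coef (phi : 'X_{1..n} -> 'X_{1..n'}) h z :
  (mimg phi h)@_z = \sum_(m <- msupp h) h@_m * (phi m == z)%:R.
Proof.
rewrite /mimg raddf_sum /=; apply: eq_bigr => m _.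
by rewrite mcoeffZ mcoeffX.
Qed.



Lemma mimg_coef_img (phi : 'X_{1..n} -> 'X_{1..n'}) h m0 :
  {in msupp h &, injective phi} -> m0 \in msupp h -> (mimg phi h)@_(phi m0) = h@_m0.
Proof.
move=> inj m0s; rewrite mimg_coef (bigD1_seq m0) ?msupp_uniq //= eqxx mulr1.
rewrite big1_seq ?addr0 // => m /andP [ne ms].
case: eqP => [/(inj _ _ ms m0s) e|_]; last by rewrite mulr0.
by rewrite e eqxx in ne.
Qed.

Lemma mimg_coef_out (phi : 'X_{1..n} -> 'X_{1..n'}) h z :
  (forall m, m \in msupp h -> phi m != z) -> (mimg phi h)@_z = 0.
Proof.
move=> H; rewrite mimg_coef big1_seq // => m /andP [_ ms].
by rewrite (negbTE (H m ms)) mulr0.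
Qed.

Lemma mimg_msupp (phi : 'X_{1..n} -> 'X_{1..n'}) h z :
  {in msupp h &, injective phi} ->
  (z \in msupp (mimg phi h)) <-> exists2 m, m \in msupp h & z = phi m.
Proof.
move=> inj; split.
  move=> zs; case: (boolP (has (fun m => phi m == z) (msupp h))).
    by case/hasP => m ms /eqP e; exists m.
  move/hasPn => H; have c0 : (mimg phi h)@_z = 0.
    by apply: mimg_coef_out => m ms; apply: H.
  by move: zs; rewrite mcoeff_msupp c0 eqxx.
case=> m ms ->; rewrite mcoeff_msupp mimg_coef_img //.
by rewrite -mcoeff_msupp.
Qed.

Lemma eq_mimg (phi psi : 'X_{1..n} -> 'X_{1..n'}) h :
  {in msupp h, phi =1 psi} -> mimg phi h = mimg psi h.
Proof. by move=> e; apply: eq_big_seq => m ms; rewrite e. Qed.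

End Mimg.

Lemma mimg_id n (h : {mpoly CC[n]}) : mimg id h = h.
Proof. by rewrite {2}[h]mpolyE. Qed.

Lemma coef_sum_eq n (h : {mpoly CC[n]}) z : \sum_(m <- msupp h) h@_m * (m == z)%:R = h@_z.
Proof. by rewrite -(@mimg_coef n n id) mimg_id. Qed.

Lemma comp_mimg n n' k (lq : n'.-tuple {mpoly CC[k]}) (phi : 'X_{1..n} -> 'X_{1..n'})
   (psi : 'X_{1..n'} -> 'X_{1..k}) (h : {mpoly CC[n]}) :
  (forall m, comp_mpoly lq 'X_[m] = 'X_[psi m]) ->
  comp_mpoly lq (mimg phi h) = mimg (fun m => psi (phi m)) h.
Proof.
move=> H; rewrite /mimg raddf_sum /=; apply: eq_bigr => m _.
by rewrite comp_mpolyZ H.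
Qed.

Lemma mnm_eq_sub n (a b c : 'X_{1..n}) : (b <= a)%MM -> (a == c + b)%MM = (a - b == c)%MM.
Proof.
move=> ba; apply/eqP/eqP => [->|<-]; first by rewrite addmK.
by rewrite submK.
Qed.

Lemma lem_U n (v : 'I_n) w (a : 'X_{1..n}) : (w <= a v)%N -> (U_(v) *+ w <= a)%MM.
Proof.
move=> h; apply/mnm_lepP => i; rewrite mulmnE mnm1E.
by case: eqP => [<-|_]; rewrite ?mul1n ?mul0n.
Qed.

Lemma mdivX_coef n (v : 'I_n) w (q : {mpoly CC[n]}) z :
  (mdivX v w q)@_z = q@_(z + U_(v) *+ w)%MM.
Proof.
rewrite /mdivX raddf_sum /= -coef_sum_eq big_mkcond /=.
apply: eq_bigr => m _; case: ifP => h.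
  by rewrite mcoeffZ mcoeffX -mnm_eq_sub ?lem_U // eq_sym.
suff -> : (m == (z + U_(v) *+ w)%MM) = false by rewrite mulr0.
apply/negbTE/eqP => e; move: h; rewrite e mnmDE mulmnE mnm1E eqxx mul1n.
by rewrite leq_addl.
Qed.

Lemma mdivX_mimg n n' (v : 'I_n') w (phi : 'X_{1..n} -> 'X_{1..n'}) (h : {mpoly CC[n]}) :
  (forall m, m \in msupp h -> (w <= phi m v)%N) ->
  mdivX v w (mimg phi h) = mimg (fun m => phi m - U_(v) *+ w)%MM h.
Proof.
move=> H; apply/mpolyP => z; rewrite mdivX_coef !mimg_coef.
apply: eq_big_seq => m ms; congr (_ * _%:R).
by rewrite mnm_eq_sub // lem_U // H.
Qed.
Lemma prodX n k (a : 'I_n -> 'X_{1..k}) (m : 'X_{1..n}) :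
  \prod_(i < n) ('X_[a i] : {mpoly CC[k]}) ^+ (m i)
  = 'X_[\big[mnm_add/mnm0]_(i < n) mnm_muln (a i) (m i)].
Proof.
rewrite (big_morph (fun m : 'X_{1..k} => ('X_[m] : {mpoly CC[k]})) (@mpolyXD _ _) (@mpolyX0 _ _)).
by apply: eq_bigr => i _; rewrite mpolyXn.
Qed.

Lemma sum_mnmE n k (a : 'I_n -> 'X_{1..k}) (m : 'X_{1..n}) j :
  (\big[mnm_add/mnm0]_(i < n) mnm_muln (a i) (m i)) j = (\sum_(i < n) a i j * m i)%N.
Proof. by rewrite mnm_sumE; apply: eq_bigr => i _; rewrite mulmnE. Qed.

Lemma sum_delta n (f : 'I_n.+1 -> nat) (j : nat) : (j < n.+1)%N ->
  (\sum_(i < n.+1) ((i : nat) == j) * f i)%N = f (inord j).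
Proof.
move=> jn; rewrite (bigD1 (inord j)) //= inordK // eqxx mul1n big1 ?addn0 //.
move=> i ne; case: eqP => [e|_]; last by rewrite mul0n.
by move: ne; rewrite -e inord_val eqxx.
Qed.

Lemma sum_delta0 n (f : 'I_n -> nat) (j : nat) : (n <= j)%N ->
  (\sum_(i < n) ((i : nat) == j) * f i)%N = 0%N.
Proof.
move=> jn; rewrite big1 // => i _; case: eqP => [e|_]; last by rewrite mul0n.
by move: (ltn_ord i); rewrite e ltnNge jn.
Qed.

Definition bs_exp (p : nat) (i : 'I_p.+3) : 'X_{1..p.+4} :=
  if (i : nat) == 1%N then (U_(inord 1) + U_(inord p.+3))%MM
  else if (i : nat) == p.+2 then (U_(inord p.+2) + U_(inord p.+3))%MM
  else U_(inord i)%MM.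

Lemma tnth_bs p i : tnth (blowup_subst p) i = 'X_[bs_exp i].
Proof.
rewrite /blowup_subst tnth_mktuple /bs_exp.
by case: ifP => _; [rewrite mpolyXD | case: ifP => _; rewrite ?mpolyXD].
Qed.

Lemma inord_eq n (i : nat) (j : 'I_n.+1) : (i <= n)%N -> (inord i == j) = (i == j).
Proof. by move=> h; rewrite -(inj_eq val_inj) /= inordK. Qed.

Lemma bs_expE p (i : 'I_p.+3) (j : 'I_p.+4) :
  bs_exp i j = (((i : nat) == j) + (((i : nat) == 1%N) || ((i : nat) == p.+2)) * ((j : nat) == p.+3))%N.
Proof.
have ip : (i <= p.+3)%N by apply: ltnW.
rewrite /bs_exp; case: ifP => [/eqP e1|n1].
  by rewrite mnmDE !mnm1E !inord_eq // e1 /= mul1n (eq_sym (j : nat)).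
case: ifP => [/eqP e2|n2].
  by rewrite mnmDE !mnm1E !inord_eq // e2 /= mul1n (eq_sym (j : nat)).
by rewrite mnm1E inord_eq //= addn0.
Qed.

Definition psi_bs (p : nat) (m : 'X_{1..p.+3}) : 'X_{1..p.+4} :=
  [multinom (if (j : nat) < p.+3 then m (inord j) else (m (inord 1) + m (inord p.+2))%N)
   | j < p.+4].

Lemma comp_bs p (m : 'X_{1..p.+3}) :
  comp_mpoly (blowup_subst p) 'X_[m] = 'X_[psi_bs m].
Proof.
rewrite comp_mpolyX; under eq_bigr do rewrite tnth_bs.
rewrite prodX; congr 'X_[_]; apply/mnmP => j; rewrite sum_mnmE mnmE.
under eq_bigr do rewrite bs_expE mulnDl.
rewrite big_split /=.
case: ifP => jl.
  rewrite sum_delta // big1 ?addn0 // => i _.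
  by rewrite (ltn_eqF jl) muln0.
have jE : (j : nat) = p.+3.
  by apply/eqP; rewrite eqn_leq -ltnS ltn_ord leqNgt jl.
rewrite sum_delta0 ?jE ?leqnn // add0n eqxx.
under eq_bigr do rewrite muln1.
have -> : (\sum_(i < p.+3) ((((i : nat) == 1%N) || ((i : nat) == p.+2)) * m i))%N =
   (\sum_(i < p.+3) (((i : nat) == 1%N) * m i) + \sum_(i < p.+3) (((i : nat) == p.+2) * m i))%N.
  rewrite -big_split /=; apply: eq_bigr => i _.
  by case: eqP => [->|_]; case: eqP => [e|_] //; rewrite ?mul0n ?mul1n ?add0n ?addn0.
by rewrite !sum_delta.
Qed.

Definition kap (l : nat) (m : 'X_{1..3}) : 'X_{1..3} :=
  [multinom (if (j : nat) == 2%N then (m j * l)%N else m j) | j < 3].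

Lemma comp_bchange l (m : 'X_{1..3}) :
  comp_mpoly [tuple (if (i : nat) == 2%N then 'X_i ^+ l else 'X_i) | i < 3] 'X_[m]
  = ('X_[kap l m] : {mpoly CC[3]}).
Proof.
have tE (i : 'I_3) : tnth [tuple (if (i : nat) == 2%N then 'X_i ^+ l else 'X_i) | i < 3] i
    = ('X_[U_(i) *+ (if (i : nat) == 2%N then l else 1%N)] : {mpoly CC[3]}).
  by rewrite tnth_mktuple; case: ifP => _; rewrite -mpolyXn ?expr1.
rewrite comp_mpolyX; under eq_bigr do rewrite tE.
rewrite prodX; congr 'X_[_]; apply/mnmP => j; rewrite sum_mnmE mnmE.
rewrite (bigD1 j) //= mulmnE mnm1E eqxx mul1n big1 ?addn0.
  by case: ifP => _; rewrite ?mul1n // mulnC.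
by move=> i ne; rewrite mulmnE mnm1E (negbTE ne) mul0n.
Qed.
Definition Ew (w : nat) (m : 'X_{1..3}) (q : nat) : nat := (m (ve 0) + q * m vs - w * q)%N.
Definition wcond (w Q : nat) (m : 'X_{1..3}) : bool := (w * Q <= m (ve 0) + Q * m vs)%N.

Definition phiQ (w Q : nat) (m : 'X_{1..3}) : 'X_{1..Q.+3} :=
  [multinom (if (j : nat) == 0%N then m vt else if (j : nat) == 1%N then m vs
             else Ew w m (j - 2)) | j < Q.+3].

Lemma wcond_le w Q q m : (q <= Q)%N -> wcond w Q m -> wcond w q m.
Proof.
rewrite /wcond; move: (m (ve 0)) (m vs) => a b qQ h.
case: (leqP w b) => wb.
  by apply: leq_trans (leq_addl _ _); rewrite mulnC leq_mul2l wb orbT.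
have e1 : (w * Q = Q * b + Q * (w - b))%N by rewrite -mulnDr subnKC ?(ltnW wb) // mulnC.
have e2 : (w * q = q * b + q * (w - b))%N by rewrite -mulnDr subnKC ?(ltnW wb) // mulnC.
have l1 : (q * (w - b) <= Q * (w - b))%N by rewrite leq_mul2r qQ orbT.
lia.
Qed.

Lemma mnm3E (m : 'X_{1..3}) (j : 'I_3) :
  m j = if (j : nat) == 0%N then m vt else if (j : nat) == 1%N then m vs else m (ve 0).
Proof.
by case: j => [[|[|[|j]]] jl] //=; congr (m _); apply: val_inj; rewrite /= inordK.
Qed.

Lemma mnm3P (m m' : 'X_{1..3}) : m vt = m' vt -> m vs = m' vs -> m (ve 0) = m' (ve 0) -> m = m'.
Proof. by move=> e0 e1 e2; apply/mnmP => j; rewrite !(mnm3E _ j) e0 e1 e2. Qed.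

Lemma inord_val_eq n (j : 'I_n.+1) k : (k <= n)%N -> ((inord k : 'I_n.+1) = j) <-> (k = j).
Proof. by move=> kn; split => [<-|->]; rewrite ?inordK ?inord_val. Qed.

Lemma phiQE w Q m (j : 'I_Q.+3) : phiQ w Q m j =
  if (j : nat) == 0%N then m vt else if (j : nat) == 1%N then m vs else Ew w m (j - 2).
Proof. by rewrite mnmE. Qed.

Lemma phiQ_t w Q m : phiQ w Q m vt = m vt.
Proof. by rewrite phiQE /vt inordK. Qed.
Lemma phiQ_s w Q m : phiQ w Q m vs = m vs.
Proof. by rewrite phiQE /vs inordK. Qed.
Lemma phiQ_e w Q m q : (q <= Q)%N -> phiQ w Q m (ve q) = Ew w m q.
Proof. by move=> qQ; rewrite phiQE /ve inordK ?ltnS //= subn2. Qed.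

Lemma phiQ_inj w Q : injective (phiQ w Q).
Proof.
move=> m m' e; apply: mnm3P.
- by rewrite -(phiQ_t w Q m) e phiQ_t.
- by rewrite -(phiQ_s w Q m) e phiQ_s.
have := phiQ_e w m (leq0n Q); rewrite e phiQ_e // /Ew !(mul0n, muln0, addn0, subn0).
by move->.
Qed.

Lemma phiQ0 w m : phiQ w 0 m = m.
Proof.
apply: mnm3P; rewrite ?phiQ_t ?phiQ_s //.
by rewrite phiQ_e // /Ew !(mul0n, muln0, addn0, subn0).
Qed.

Lemma phiQ_step w Q m : wcond w Q.+1 m ->
  (psi_bs (phiQ w Q m) - U_(ve Q.+1) *+ w)%MM = phiQ w Q.+1 m.
Proof.
move=> wc; have wc0 := wcond_le (leqnSn Q) wc.
move: wc wc0; rewrite /wcond => wc wc0.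
apply/mnmP => j; rewrite mnmBE mulmnE mnm1E [RHS]phiQE [psi_bs _ _]mnmE.
have vE : ((ve Q.+1 : 'I_Q.+4) == j) = ((j : nat) == Q.+3).
  by rewrite /ve inord_eq // eq_sym.
rewrite vE; case: ifP => jl.
  by rewrite (ltn_eqF jl) mul0n subn0 phiQE inordK.
have jE : (j : nat) = Q.+3.
  by apply/eqP; rewrite eqn_leq -ltnS ltn_ord leqNgt jl.
rewrite jE eqxx mul1n /=.
rewrite -[inord 1]/(vs : 'I_Q.+3) -[inord Q.+2]/(ve Q : 'I_Q.+3) phiQ_s phiQ_e //.
rewrite /Ew /=.
move: wc wc0; rewrite !mulSn !mulnS.
lia.
Qed.

Lemma bchain_mimg w Q n0 (kp : 'X_{1..n0} -> 'X_{1..3}) (h0 : {mpoly CC[n0]}) :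
  (forall m, m \in msupp h0 -> wcond w Q (kp m)) ->
  bchain w (mimg kp h0) Q = mimg (fun m => phiQ w Q (kp m)) h0.
Proof.
elim: Q => [|Q IH] H.
  by rewrite /=; apply: eq_mimg => m _; rewrite phiQ0.
rewrite /= IH; last by move=> m ms; apply: wcond_le (H m ms).
rewrite (comp_mimg _ _ (@comp_bs Q)) mdivX_mimg.
  by apply: eq_mimg => m ms; rewrite phiQ_step // H.
move=> m ms; have wc := H m ms; have wc0 := wcond_le (leqnSn Q) wc.
rewrite mnmE /ve inordK // ltnn -[inord 1]/(vs : 'I_Q.+3) -[inord Q.+2]/(ve Q : 'I_Q.+3).
rewrite phiQ_s phiQ_e // /Ew.
move: wc wc0; rewrite /wcond mulSn mulnS; lia.
Qed.
Lemma big_minn_le (l : seq nat) i z : z \in l -> (\big[minn/i]_(w <- l) w <= z)%N.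
Proof.
elim: l => [//|a l IH]; rewrite inE big_cons => /orP [/eqP ->|zl].
  by rewrite geq_min leqnn.
by rewrite geq_min (IH zl) orbT.
Qed.

Lemma big_minn_mem (l : seq nat) i : \big[minn/i]_(w <- l) w \in i :: l.
Proof.
elim: l => [|a l IH]; first by rewrite big_nil mem_head.
rewrite big_cons /minn; case: ifP => _; first by rewrite !inE eqxx orbT.
move: IH; rewrite !inE => /orP [->//|->]; by rewrite !orbT.
Qed.

Lemma minseq_le (l : seq nat) z : z \in l -> (minseq l <= z)%N.
Proof. exact: big_minn_le. Qed.

Lemma minseq_mem (l : seq nat) : l != [::] -> minseq l \in l.
Proof.
move=> ne; have := big_minn_mem l (\max_(x <- l) x); rewrite -/(minseq l) inE.
case/orP => [/eqP e|//].
case: l ne e => [//|a l] _ e.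
have h1 := minseq_le (mem_head a l).
have h2 : (a <= \max_(x <- a :: l) x)%N by apply: leq_bigmax_seq (mem_head a l) _.
have -> : minseq (a :: l) = a by apply/eqP; rewrite eqn_leq h1 e h2.
exact: mem_head.
Qed.

Lemma mord_le n (v : 'I_n) (h : {mpoly CC[n]}) m : m \in msupp h -> (mord v h <= m v)%N.
Proof. by move=> ms; apply: minseq_le; apply: map_f. Qed.

Lemma mord_ex n (v : 'I_n) (h : {mpoly CC[n]}) : h != 0 ->
  exists2 m, m \in msupp h & m v = mord v h.
Proof.
move=> hn0; have ne : [seq (m : 'X_{1..n}) v | m <- msupp h] != [::].
  by rewrite -size_eq0 size_map size_eq0 msupp_eq0.
by have /mapP [m ms e] := minseq_mem ne; exists m.
Qed.
Lemma vs_vt n : (vs : 'I_n.+3) != vt.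
Proof. by rewrite /vs /vt inord_eq //= inordK. Qed.

Lemma vs_ve n q : (q <= n)%N -> ((vs : 'I_n.+3) == ve q) = false.
Proof. by move=> qn; rewrite /vs /ve inord_eq //= inordK // ltnS ltnS. Qed.

Lemma vt_ve n q : (q <= n)%N -> ((vt : 'I_n.+3) == ve q) = false.
Proof. by move=> qn; rewrite /vt /ve inord_eq //= inordK // ltnS ltnS. Qed.

Definition cst n (m : 'X_{1..n.+3}) : 'X_{1..n.+3} :=
  (U_(vs) *+ m vs + U_(vt) *+ m vt)%MM.

Lemma cst_le n (m m' : 'X_{1..n.+3}) : m' vs = m vs -> m' vt = m vt -> (cst m <= m')%MM.
Proof.
move=> es et; apply/mnm_lepP => k; rewrite mnmDE !mulmnE !mnm1E.
have nts : ((vt : 'I_n.+3) == vs) = false by rewrite eq_sym (negbTE (vs_vt n)).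
case: (eqVneq vs k) => [<-|ns]; first by rewrite nts mul1n mul0n addn0 es.
case: (eqVneq vt k) => [<-|nt]; first by rewrite mul1n mul0n add0n et.
by rewrite /= !mul0n.
Qed.

Lemma stcoef_supp n (h : {mpoly CC[n.+3]}) m : m \in msupp h ->
  (m - cst m)%MM \in msupp (stcoef h (m vs) (m vt)).
Proof.
move=> ms; rewrite mcoeff_msupp.
suff -> : (stcoef h (m vs) (m vt))@_(m - cst m) = h@_m by rewrite -mcoeff_msupp.
rewrite /stcoef raddf_sum /= -[RHS]coef_sum_eq big_mkcond /=.
apply: eq_bigr => m' _; case: ifP => /andP => [[/eqP es /eqP et]|P'].
  rewrite mcoeffZ mcoeffX -/(cst m); congr (_ * _%:R).
  have ec : cst m' = cst m by rewrite /cst es et.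
  rewrite -ec -mnm_eq_sub; last exact: cst_le.
  by rewrite ec submK //; apply: cst_le.
case: (eqVneq m' m) => [e|ne]; last by rewrite mulr0.
by exfalso; apply: P'; rewrite e !eqxx.
Qed.

Lemma cst_ve n (m : 'X_{1..n.+3}) q : (q <= n)%N -> (m - cst m)%MM (ve q) = m (ve q).
Proof.
by move=> qn; rewrite mnmBE mnmDE !mulmnE !mnm1E vs_ve // vt_ve // !mul0n subn0.
Qed.

Lemma wt_ind w d (h : {mpoly CC[3]}) P :
  st_homog h d ->
  (forall q, (q < P)%N -> forall i, (i < w - sord h)%N ->
     stcoef (bchain w h 0) (sord h + i) (d - sord h - i) != 0 ->
     (w - sord h - i <= mord (ve q) (stcoef (bchain w h q) (sord h + i) (d - sord h - i)))%N) ->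
  forall m, m \in msupp h -> wcond w P m.
Proof.
move=> hom H.
suff: forall q, (q <= P)%N -> forall m, m \in msupp h -> wcond w q m by apply.
elim => [|q IH] qP m ms; first by rewrite /wcond muln0.
have IHq := IH (ltnW qP).
case: (leqP w (m vs)) => wm.
  by rewrite /wcond; apply: leq_trans (leq_addl _ _); rewrite mulnC leq_mul2l wm orbT.
have am : (sord h <= m vs)%N by apply: mord_le.
have hm := hom m ms.
have ei : (sord h + (m vs - sord h) = m vs)%N by rewrite subnKC.
have ej : (d - sord h - (m vs - sord h) = m vt)%N by lia.
have il : (m vs - sord h < w - sord h)%N by lia.
have Hq := H q qP _ il; rewrite ei ej in Hq.
have nz0 : stcoef (bchain w h 0) (m vs) (m vt) != 0.
  by apply/eqP => e; have := stcoef_supp ms; rewrite /= e msupp0.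
have {Hq nz0} Hq := Hq nz0.
have bE : bchain w h q = mimg (phiQ w q) h.
  by rewrite -{1}[h](@mimg_id 3); apply: bchain_mimg.
have m's : phiQ w q m \in msupp (bchain w h q).
  by rewrite bE; apply/mimg_msupp; [move=> ? ? _ _; apply: phiQ_inj | exists m].
have := mord_le (ve q) (stcoef_supp m's).
rewrite phiQ_s phiQ_t cst_ve // phiQ_e // => h2.
have h3 := leq_trans Hq h2.
move: IHq h3; rewrite /wcond /Ew mulnS mulSn; lia.
Qed.
Definition wge (P c : nat) (h : {mpoly CC[3]}) : Prop :=
  forall m, m \in msupp h -> (c <= m (ve 0) + P * m vs)%N.

Lemma wge_mul P a b p q : wge P a p -> wge P b q -> wge P (a + b) (p * q).
Proof.
move=> hp hq m /msuppM_le /allpairsP [[m1 m2] /= [m1s m2s ->]].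
have := hp m1 m1s; have := hq m2 m2s.
rewrite !mnmDE mulnDr; lia.
Qed.

Lemma wge_add P a p q : wge P a p -> wge P a q -> wge P a (p + q).
Proof.
move=> hp hq m /msuppD_le; rewrite mem_cat => /orP [/hp|/hq] //.
Qed.

Lemma wge0 P h : wge P 0 h.
Proof. by []. Qed.

Lemma wge_le P a b h : (b <= a)%N -> wge P a h -> wge P b h.
Proof. by move=> ba H m ms; apply: leq_trans ba (H m ms). Qed.

Lemma wge_D P f g : wge P (4 * P) f -> wge P (6 * P) g -> wge P (12 * P) (Disc f g).
Proof.
move=> hf hg; rewrite /Disc; apply: wge_add.
  apply: (wge_le (a := 0 + (4 * P + (4 * P + (4 * P + 0))))); first by lia.
  apply: wge_mul; first exact: wge0.
  rewrite !exprS expr0; do 2! apply: wge_mul => //; apply: wge_mul => //; exact: wge0.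
apply: (wge_le (a := 0 + (6 * P + (6 * P + 0)))); first by lia.
apply: wge_mul; first exact: wge0.
rewrite !exprS expr0; apply: wge_mul => //; apply: wge_mul => //; exact: wge0.
Qed.

Lemma wge_wcond w P h : wge P (w * P) h <-> (forall m, m \in msupp h -> wcond w P m).
Proof. by []. Qed.

Lemma D_weight (f g : {mpoly CC[3]}) (P : nat) :
  st_homog f 8 -> st_homog g 12 -> (forall q, (q < P)%N -> ~ condP f g q) ->
  forall m, m \in msupp (Disc f g) -> wcond 12 P m.
Proof.
move=> Hf Hg HPmin.
have wf : forall m, m \in msupp f -> wcond 4 P m.
  apply: (wt_ind Hf) => q qP i il nz; rewrite leqNgt; apply/negP => lt.
  by apply: (HPmin q qP); left; exists i.
have wg : forall m, m \in msupp g -> wcond 6 P m.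
  apply: (wt_ind Hg) => q qP i il nz; rewrite leqNgt; apply/negP => lt.
  by apply: (HPmin q qP); right; exists i.
exact: (wge_D wf wg).
Qed.
Definition msum (Q : nat) (N : nat -> nat) (l : seq nat) : 'X_{1..Q.+3} :=
  \big[mnm_add/mnm0]_(q <- l) mnm_muln U_(ve q) (N q).

Lemma msumE Q N l j : msum Q N l j = (\sum_(q <- l) ((ve q : 'I_Q.+3) == j) * N q)%N.
Proof. by rewrite mnm_sumE; apply: eq_bigr => q _; rewrite mulmnE mnm1E. Qed.

Lemma ve_eq Q q q' : (q <= Q)%N -> (q' <= Q)%N -> ((ve q : 'I_Q.+3) == ve q') = (q == q').
Proof. by move=> h h'; rewrite /ve inord_eq //= inordK // ltnS ltnS. Qed.

Lemma msum_ve Q N l q : uniq l -> all (fun q => q <= Q)%N l -> (q <= Q)%N ->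
  msum Q N l (ve q) = ((q \in l) * N q)%N.
Proof.
move=> ul al qQ; rewrite msumE; elim: l ul al => [|a l IH]; first by rewrite big_nil.
rewrite big_cons /= => /andP [al ul] /andP [aQ alQ].
rewrite IH // ve_eq // inE; case: (eqVneq a q) => [<-|ne].
  by rewrite (negbTE al) /= mul0n addn0.
by rewrite mul0n add0n.
Qed.

Lemma msum_vs Q N l : all (fun q => q <= Q)%N l -> msum Q N l vs = 0%N.
Proof.
move=> al; rewrite msumE big1_seq // => q /andP [_ ql].
by rewrite eq_sym vs_ve ?mul0n //; exact: (allP al q ql).
Qed.

Lemma msum_vt Q N l : all (fun q => q <= Q)%N l -> msum Q N l vt = 0%N.
Proof.
move=> al; rewrite msumE big1_seq // => q /andP [_ ql].
by rewrite eq_sym vt_ve ?mul0n //; exact: (allP al q ql).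
Qed.

Lemma foldr_mdiv Q n0 (psi : 'X_{1..n0} -> 'X_{1..Q.+3}) h0 (N : nat -> nat) l :
  uniq l -> all (fun q => q <= Q)%N l ->
  (forall m, m \in msupp h0 -> forall q, q \in l -> (N q <= psi m (ve q))%N) ->
  foldr (fun q h => mdivX (ve q) (N q) h) (mimg psi h0) l
  = mimg (fun m => psi m - msum Q N l)%MM h0.
Proof.
elim: l => [|a l IH] ul al H.
  by apply: eq_mimg => m _; rewrite /msum big_nil subm0.
move: ul al => /= /andP [anl ul] /andP [aQ alQ].
rewrite IH //; last by move=> m ms q ql; apply: H => //; rewrite inE ql orbT.
rewrite mdivX_mimg.
  apply: eq_mimg => m _; rewrite submDA; congr (_ - _)%MM.
  by rewrite /msum big_cons addmC.
move=> m ms; rewrite mnmBE msum_ve // (negbTE anl) mul0n subn0.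
by apply: H => //; rewrite mem_head.
Qed.

Section DStruct.
Variables (D : {mpoly CC[3]}) (kp : 'X_{1..3} -> 'X_{1..3}) (Q : nat).
Hypothesis kp_inj : injective kp.
Hypothesis HD : D != 0.
Hypothesis Hw : forall m, m \in msupp D -> wcond 12 Q (kp m).

Local Notation D' := (mimg kp D).

Lemma Dfin_E : Dfin D' Q = mimg (fun m => phiQ 12 Q (kp m)) D.
Proof. exact: bchain_mimg. Qed.

Lemma psiQ_inj : injective (fun m => phiQ 12 Q (kp m)).
Proof. by move=> m m' /phiQ_inj /kp_inj. Qed.

Lemma Dfin_supp z : z \in msupp (Dfin D' Q) <-> exists2 m, m \in msupp D & z = phiQ 12 Q (kp m).
Proof. by rewrite Dfin_E; apply: mimg_msupp => m m' _ _; apply: psiQ_inj. Qed.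

Lemma nord_le q m : (q <= Q)%N -> m \in msupp D -> (nord D' Q q <= Ew 12 (kp m) q)%N.
Proof.
move=> qQ ms; rewrite /nord -(phiQ_e 12 (kp m) qQ); apply: mord_le.
by apply/Dfin_supp; exists m.
Qed.

Lemma nord_ex q : (q <= Q)%N -> exists2 m, m \in msupp D & Ew 12 (kp m) q = nord D' Q q.
Proof.
move=> qQ; have nz : Dfin D' Q != 0.
  have [m0 m0s] : exists m0, m0 \in msupp D.
    case e: (msupp D) => [|a l]; first by move: HD; rewrite -msupp_eq0 e.
    by exists a; rewrite mem_head.
  apply/eqP => e; have : phiQ 12 Q (kp m0) \in msupp (Dfin D' Q) by apply/Dfin_supp; exists m0.
  by rewrite e msupp0.
have [z /Dfin_supp [m ms ->] e] := mord_ex (ve q) nz.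
by exists m => //; rewrite -(phiQ_e 12 (kp m) qQ).
Qed.

Definition psiP (m : 'X_{1..3}) : 'X_{1..Q.+3} :=
  (phiQ 12 Q (kp m) - msum Q (nord D' Q) (iota 0 Q.+1))%MM.

Lemma iota_all : all (fun q => q <= Q)%N (iota 0 Q.+1).
Proof. by apply/allP => q; rewrite mem_iota add0n ltnS. Qed.

Lemma Dprime_E : Dprime D' Q = mimg psiP D.
Proof.
rewrite /Dprime Dfin_E foldr_mdiv //; first exact: iota_uniq.
  exact: iota_all.
move=> m ms q; rewrite mem_iota add0n ltnS => qQ.
by rewrite phiQ_e // nord_le.
Qed.

Lemma psiP_ve m q : (q <= Q)%N -> psiP m (ve q) = (Ew 12 (kp m) q - nord D' Q q)%N.
Proof.
move=> qQ; rewrite mnmBE msum_ve ?iota_uniq ?iota_all // mem_iota add0n ltnS qQ mul1n.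
by rewrite phiQ_e.
Qed.

Lemma psiP_vs m : psiP m vs = kp m vs.
Proof. by rewrite mnmBE msum_vs ?iota_all // subn0 phiQ_s. Qed.
Lemma psiP_vt m : psiP m vt = kp m vt.
Proof. by rewrite mnmBE msum_vt ?iota_all // subn0 phiQ_t. Qed.

Lemma psiP_inj : {in msupp D &, injective psiP}.
Proof.
move=> m m' ms m's e; apply: kp_inj; apply: mnm3P.
- by rewrite -psiP_vt e psiP_vt.
- by rewrite -psiP_vs e psiP_vs.
have := congr1 (fun z : 'X_{1..Q.+3} => z (ve 0)) e => /=.
rewrite !psiP_ve // => h.
have h1 := nord_le (leq0n Q) ms; have h2 := nord_le (leq0n Q) m's.
move: h h1 h2; rewrite /Ew !(mul0n, muln0, addn0, subn0); lia.
Qed.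

Lemma Dprime_supp z : z \in msupp (Dprime D' Q) <-> exists2 m, m \in msupp D & z = psiP m.
Proof. rewrite Dprime_E; exact: mimg_msupp psiP_inj. Qed.

End DStruct.
Section Lines.
Variable (T : eqType) (s : seq T) (x y : T -> nat).

Section Gen.
Variable R : realFieldType.

Definition Xv (m : T) : R := (x m)%:R.
Definition Sv (m : T) : R := (y m)%:R - (x m)%:R.
Definition Lf (m : T) (r : R) : R := (1 - r) * (x m)%:R + r * (y m)%:R.

Lemma LfE m r : Lf m r = Xv m + r * Sv m.
Proof. rewrite /Lf /Xv /Sv; ring. Qed.

Definition act (r : R) (m : T) : bool := all (fun n => Lf m r <= Lf n r) s.
Definition brk (r : R) : bool :=
  has (fun m => has (fun n => [&& act r m, act r n & Sv m != Sv n]) s) s.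
Definition cross (m n : T) : R := (Xv n - Xv m) / (Sv m - Sv n).

Lemma argmin (F : T -> R) (l : seq T) : l != [::] ->
  exists2 m, m \in l & forall n, n \in l -> F m <= F n.
Proof.
elim: l => [//|a l IH] _.
case: (altP (l =P [::])) => [->|ne].
  by exists a; rewrite ?mem_seq1 // => n; rewrite mem_seq1 => /eqP ->.
have [m ml Hm] := IH ne.
case: (leP (F a) (F m)) => Ham.
  exists a; first by rewrite inE eqxx.
  move=> n; rewrite inE => /orP [/eqP ->//|/Hm]; exact: le_trans.
exists m; first by rewrite inE ml orbT.
move=> n; rewrite inE => /orP [/eqP ->|/Hm //]; exact: ltW.
Qed.

Lemma act_ex r : s != [::] -> exists2 m, m \in s & act r m.
Proof.
move=> ne; have [m ms Hm] := argmin (Lf ^~ r) ne.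
by exists m => //; apply/allP => n /Hm.
Qed.

Lemma act_eq r m n : act r m -> act r n -> m \in s -> n \in s -> Lf m r = Lf n r.
Proof.
move=> /allP am /allP an ms ns; apply/eqP; rewrite eq_le.
by rewrite (am n ns) (an m ms).
Qed.

Lemma act_conv a b r m : a <= r -> r <= b -> act a m -> act b m -> act r m.
Proof.
move=> ar rb /allP aa /allP ab; apply/allP => n ns; rewrite !LfE.
have := aa n ns; have := ab n ns; rewrite !LfE => hb ha.
case: (leP (Sv m) (Sv n)) => hs.
  rewrite -subr_ge0.
  have -> : Xv n + r * Sv n - (Xv m + r * Sv m) =
     (Xv n + a * Sv n - (Xv m + a * Sv m)) + (r - a) * (Sv n - Sv m) by ring.
  apply: addr_ge0; first by rewrite subr_ge0.
  by apply: mulr_ge0; rewrite subr_ge0.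
rewrite -subr_ge0.
have -> : Xv n + r * Sv n - (Xv m + r * Sv m) =
   (Xv n + b * Sv n - (Xv m + b * Sv m)) + (b - r) * (Sv m - Sv n) by ring.
apply: addr_ge0; first by rewrite subr_ge0.
by apply: mulr_ge0; rewrite subr_ge0 // ltW.
Qed.

Lemma brk_cross r : brk r -> exists m n, [/\ m \in s, n \in s, Sv m != Sv n & r = cross m n].
Proof.
case/hasP => m ms /hasP [n ns /and3P [am an sd]].
exists m, n; split => //.
have := act_eq am an ms ns; rewrite !LfE => e.
rewrite /cross; apply: (canRL (mulfK _)); first by rewrite subr_eq0.
apply/eqP; rewrite -subr_eq0; apply/eqP.
have -> : r * (Sv m - Sv n) - (Xv n - Xv m) = (Xv m + r * Sv m) - (Xv n + r * Sv n) by ring.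
by rewrite e subrr.
Qed.

End Gen.
End Lines.
Section Lines2.
Variable (T : eqType) (s : seq T) (x y : T -> nat).
Variable R : realFieldType.
Local Notation Lf := (@Lf T x y R).
Local Notation Sv := (@Sv T x y R).
Local Notation act := (@act T s x y R).
Local Notation brk := (@brk T s x y R).

Lemma Lf_diff n m (r a : R) :
  Lf n r - Lf m r = (Lf n a - Lf m a) + (r - a) * (Sv n - Sv m).
Proof. rewrite !LfE; ring. Qed.

Lemma brk_between (a b : R) : a < b -> s != [::] ->
  (forall m, m \in s -> ~~ (act a m && act b m)) -> exists r, a < r < b /\ brk r.
Proof.
move=> ab ne H.
have [m0 m0s am0] := act_ex x y a ne.
set sa := filter (act a) s.
have sane : sa != [::].
  apply/eqP => e; have : m0 \in sa by rewrite mem_filter am0 m0s.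
  by rewrite e.
have [m] := argmin Sv sane.
rewrite mem_filter => /andP [am ms] Hm.
have nbm : ~~ act b m by have := H m ms; rewrite am.
have [n1 n1s] : exists2 n, n \in s & ~~ (Lf m b <= Lf n b) by apply/allPn.
rewrite -ltNge => ln1.
set C := filter (fun n => Lf n b < Lf m b) s.
have Cne : C != [::].
  apply/eqP => e; have : n1 \in C by rewrite mem_filter ln1 n1s.
  by rewrite e.
pose t n := a + (Lf n a - Lf m a) / (Sv m - Sv n).
have ga k : k \in s -> 0 <= Lf k a - Lf m a.
  by move=> ks; rewrite subr_ge0; exact: (allP am k ks).
have slC k : k \in s -> Lf k b < Lf m b -> Sv k < Sv m.
  move=> ks hb; rewrite ltNge; apply/negP => hs.
  move: hb; rewrite -subr_lt0 (Lf_diff _ _ _ a) => hb.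
  have : 0 <= (Lf k a - Lf m a) + (b - a) * (Sv k - Sv m).
    by apply: addr_ge0; [exact: ga | apply: mulr_ge0; rewrite subr_ge0 // ltW].
  by rewrite leNgt hb.
have [n0 n0C Hn0] := argmin t Cne.
move: (n0C); rewrite mem_filter => /andP [hb0 n0s].
set g := Lf n0 a - Lf m a.
set d := Sv m - Sv n0.
have dgt0 : 0 < d by rewrite subr_gt0; exact: slC.
have gge0 : 0 <= g by exact: ga.
have ggt0 : 0 < g.
  rewrite lt_def gge0 andbT; apply/negP => /eqP g0.
  have an0 : act a n0.
    apply/allP => k ks; have : Lf n0 a = Lf m a by apply/eqP; rewrite -subr_eq0 -/g g0.
    by move=> ->; exact: (allP am k ks).
  have := Hm n0; rewrite mem_filter an0 n0s => /(_ isT).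
  by rewrite leNgt -subr_gt0 -/d dgt0.
have tE : t n0 = a + g / d by [].
have h1 : a < t n0 by rewrite tE ltrDl divr_gt0.
have gbd : g < (b - a) * d.
  move: hb0; rewrite -subr_lt0 (Lf_diff _ _ _ a) -/g.
  have -> : (b - a) * (Sv n0 - Sv m) = - ((b - a) * d) by rewrite /d; ring.
  by rewrite subr_lt0.
have h2 : t n0 < b.
  by rewrite tE -ltrBrDl ltr_pdivrMr.
have gdd : g / d * d = g by rewrite divfK // gt_eqF.
have eq0 : Lf n0 (t n0) = Lf m (t n0).
  apply/eqP; rewrite -subr_eq0 (Lf_diff _ _ _ a) -/g tE.
  have -> : g + (a + g / d - a) * (Sv n0 - Sv m) = g - g / d * d by rewrite /d; ring.
  by rewrite gdd subrr.
have amt : act (t n0) m.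
  apply/allP => k ks; rewrite leNgt; apply/negP => hk.
  move: (hk); rewrite -subr_lt0 (Lf_diff _ _ _ a) => hk'.
  have gk := ga k ks.
  have sk : Sv k < Sv m.
    rewrite ltNge; apply/negP => hs; move: hk'.
    apply/negP; rewrite -leNgt; apply: addr_ge0 => //.
    by apply: mulr_ge0; rewrite subr_ge0 // ltW.
  set g' := Lf k a - Lf m a in gk hk'.
  set d' := Sv m - Sv k.
  have d'gt0 : 0 < d' by rewrite subr_gt0.
  have e1 : (t n0 - a) * (Sv k - Sv m) = - ((t n0 - a) * d') by rewrite /d'; ring.
  rewrite e1 subr_lt0 in hk'.
  have kC : k \in C.
    rewrite mem_filter ks andbT -subr_lt0 (Lf_diff _ _ _ a) -/g'.
    have -> : (b - a) * (Sv k - Sv m) = - ((b - a) * d') by rewrite /d'; ring.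
    rewrite subr_lt0; apply: (lt_trans hk').
    by rewrite ltr_pM2r // ltrBlDr subrK.
  suff : t k < t n0 by rewrite ltNge (Hn0 k kC).
  rewrite {1}/t -/g' -/d'.
  have : g' / d' < t n0 - a by rewrite ltr_pdivrMr.
  by rewrite ltrBrDl.
have an0t : act (t n0) n0.
  by apply/allP => k ks; rewrite eq0; exact: (allP amt k ks).
exists (t n0); split; first by rewrite h1 h2.
apply/hasP; exists m => //; apply/hasP; exists n0 => //.
by rewrite amt an0t /= -subr_eq0 -/d (gt_eqF dgt0).
Qed.

End Lines2.
Lemma big_min_le (l : seq RR) (i z : RR) : z \in l -> \big[Num.min/i]_(w <- l) w <= z.
Proof.
elim: l => [//|a l IH]; rewrite inE big_cons => /orP [/eqP ->|zl].
  by rewrite ge_min lexx.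
by rewrite ge_min (IH zl) orbT.
Qed.

Lemma big_min_mem (l : seq RR) (i : RR) : \big[Num.min/i]_(w <- l) w \in i :: l.
Proof.
elim: l => [|a l IH]; first by rewrite big_nil mem_head.
rewrite big_cons /Num.min; case: ifP => _; first by rewrite !inE eqxx orbT.
move: IH; rewrite !inE => /orP [->//|->]; by rewrite !orbT.
Qed.

Lemma rminseq_min (l : seq RR) : l != [::] ->
  rminseq l \in l /\ forall z, z \in l -> rminseq l <= z.
Proof.
case: l => [//|a l] _; split; last by move=> z; exact: big_min_le.
have := big_min_mem (a :: l) (head 0 (a :: l)); rewrite /rminseq /=.
by rewrite inE => /orP [/eqP ->|//]; rewrite mem_head.
Qed.

Lemma rminseq_uniq (l : seq RR) v : v \in l -> (forall z, z \in l -> v <= z) -> rminseq l = v.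
Proof.
move=> vl H; have ne : l != [::] by case: (l) vl.
have [m1 m2] := rminseq_min ne.
by apply/eqP; rewrite eq_le (m2 _ vl) (H _ m1).
Qed.

Lemma rminseq_eq_mem (l1 l2 : seq RR) : l1 != [::] -> l1 =i l2 -> rminseq l1 = rminseq l2.
Proof.
move=> ne e; have [m1 m2] := rminseq_min ne.
apply/esym/rminseq_uniq; first by rewrite -e.
by move=> z; rewrite -e; exact: m2.
Qed.

Lemma fin_pos (T : eqType) (l : seq T) (f : T -> RR) :
  (forall n, n \in l -> 0 < f n) -> exists d : RR, 0 < d /\ forall n, n \in l -> d <= f n.
Proof.
elim: l => [|a l IH] H; first by exists 1; split.
have [|d [d0 Hd]] := IH; first by move=> n nl; apply: H; rewrite inE nl orbT.
have fa : 0 < f a by apply: H; rewrite mem_head.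
exists (Num.min d (f a)); split; first by rewrite lt_min d0 fa.
move=> n; rewrite inE => /orP [/eqP ->|nl]; first by rewrite ge_min lexx orbT.
by rewrite ge_min Hd.
Qed.

Section LinesR.
Variable (T : eqType) (s : seq T) (x y : T -> nat).
Local Notation Lf := (@Lf T x y RR).
Local Notation Sv := (@Sv T x y RR).
Local Notation Xv := (@Xv T x RR).
Local Notation act := (@act T s x y RR).
Local Notation brk := (@brk T s x y RR).

Definition Mf (r : RR) := rminseq [seq Lf m r | m <- s].

Lemma Mf_le r m : m \in s -> Mf r <= Lf m r.
Proof.
move=> ms; have ne : [seq Lf m r | m <- s] != [::] by case: (s) ms.
by have [_ ] := rminseq_min ne; apply; apply: map_f.
Qed.

Lemma act_Mf r m : m \in s -> act r m -> Mf r = Lf m r.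
Proof.
move=> ms am; apply: rminseq_uniq; first exact: map_f.
by move=> z /mapP [n ns ->]; exact: (allP am n ns).
Qed.

Lemma Mf_act r m : m \in s -> Mf r = Lf m r -> act r m.
Proof. by move=> ms e; apply/allP => n ns; rewrite -e; exact: Mf_le. Qed.

Lemma nll_brk r : s != [::] -> not_locally_linear Mf r <-> brk r.
Proof.
move=> ne; split.
  move=> nl; apply/negPn/negP => nb; apply: nl.
  have [m0 m0s am0] := act_ex x y r ne.
  pose f n := if act r n then 1 else (Lf n r - Lf m0 r) / (`|Sv n - Sv m0| + 1).
  have [|d [d0 Hd]] := fin_pos (f := f) (l := s).
    move=> n ns; rewrite /f; case: ifP => an //.
    apply: divr_gt0; last by rewrite ltr_wpDl.
    move/negbT: an => /allPn [k ks]; rewrite -ltNge => hk.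
    rewrite subr_gt0; apply: le_lt_trans hk; exact: (allP am0 k ks).
  exists d; split => //; exists (Sv m0), (Xv m0) => z hz.
  rewrite (act_Mf m0s); first by rewrite LfE mulrC addrC.
  apply/allP => n ns; rewrite -subr_ge0. rewrite (Lf_diff _ _ _ _ _ r).
  case an: (act r n).
    have es : Sv n = Sv m0.
      apply/eqP/negPn/negP => sd; apply: (negP nb); apply/hasP; exists m0 => //.
      by apply/hasP; exists n => //; rewrite am0 an eq_sym.
    by rewrite es subrr mulr0 addr0 (act_eq an am0 ns m0s) subrr.
  have := Hd n ns; rewrite /f an ler_pdivlMr ?ltr_wpDl // => hd.
  set G := Lf n r - Lf m0 r in hd *; set A := Sv n - Sv m0 in hd *.
  have h1 : - ((z - r) * A) <= `|z - r| * `|A|.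
    by rewrite -normrM -normrN ler_norm.
  have h2 : `|z - r| * `|A| <= d * `|A| by rewrite ler_wpM2r // ltW.
  have h3 : 0 <= d * (`|A| + 1) - d * `|A| by rewrite mulrDr mulr1 addrC addKr ltW.
  apply: (le_trans h3).
  apply: (@le_trans _ _ (G - d * `|A|)); first by rewrite lerD2r.
  apply: (@le_trans _ _ (G - `|z - r| * `|A|)); first by rewrite lerD2l lerN2.
  by rewrite lerD2l lerNl.
case/hasP => m ms /hasP [n ns /and3P [am an sd]] [d [d0 [a [b H]]]].
have key k : k \in s -> act r k -> a = Sv k.
  move=> ks ak.
  have h0 : 0 < d / 2 by rewrite divr_gt0.
  have e0 : Mf r = a * r + b by apply: H; rewrite subrr normr0.
  have e1 : Mf (r + d / 2) = a * (r + d / 2) + b.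
    apply: H; rewrite addrC addKr ger0_norm ?ltW //.
    by rewrite ltr_pdivrMr // ltr_pMr // ltr1n.
  have e2 : Mf (r - d / 2) = a * (r - d / 2) + b.
    apply: H; rewrite addrC addKr normrN ger0_norm ?ltW //.
    by rewrite ltr_pdivrMr // ltr_pMr // ltr1n.
  have l1 := Mf_le (r + d / 2) ks; have l2 := Mf_le (r - d / 2) ks.
  rewrite (act_Mf ks ak) in e0.
  rewrite e1 LfE in l1; rewrite e2 LfE in l2; rewrite LfE in e0.
  have q1 : d / 2 * a <= d / 2 * Sv k by nra.
  have q2 : d / 2 * Sv k <= d / 2 * a by nra.
  rewrite ler_pM2l // in q1; rewrite ler_pM2l // in q2.
  by apply/eqP; rewrite eq_le q1 q2.
by move: sd; rewrite -(key m ms am) -(key n ns an) eqxx.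
Qed.

End LinesR.
Section LinesR2.
Variable (T : eqType) (s : seq T) (x y : T -> nat).
Local Notation Lf := (@Lf T x y RR).
Local Notation Mf := (@Mf T s x y).
Local Notation act := (@act T s x y RR).

Definition Fk (k : nat) (m : T) (z : RR) : RR := (k%:R - z) * (x m)%:R + z * (y m)%:R.
Definition Mk (k : nat) (z : RR) := rminseq [seq Fk k m z | m <- s].

Lemma Fk_Lf k m z : (0 < k)%N -> Fk k m z = k%:R * Lf m (z / k%:R).
Proof.
move=> k0; have kn0 : (k%:R : RR) != 0 by rewrite pnatr_eq0 -lt0n.
rewrite /Fk /Lf; field.
by [].
Qed.

Lemma Mk_scale k z : (0 < k)%N -> s != [::] -> Mk k z = k%:R * Mf (z / k%:R).
Proof.
move=> k0 ne; have [m0 m0s am0] := act_ex x y (z / k%:R) ne.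
rewrite (act_Mf m0s am0); apply: rminseq_uniq.
  by rewrite -Fk_Lf //; apply: map_f.
move=> w /mapP [n ns ->]; rewrite Fk_Lf // ler_pM2l ?ltr0n //.
exact: (allP am0 n ns).
Qed.

Lemma Mk_ex k z : s != [::] -> exists2 m, m \in s & Mk k z = Fk k m z.
Proof.
move=> ne; have ne' : [seq Fk k m z | m <- s] != [::] by case: (s) ne.
by have [/mapP [m ms e] _] := rminseq_min ne'; exists m.
Qed.

Lemma Mk_le k z m : m \in s -> Mk k z <= Fk k m z.
Proof.
move=> ms; have ne' : [seq Fk k m z | m <- s] != [::] by case: (s) ms.
by have [_ ] := rminseq_min ne'; apply; apply: map_f.
Qed.

Lemma Mk_concave k : s != [::] -> concave_on (Mk k) 0 k%:R.
Proof.
move=> ne a b l _ _ /andP [l0 l1].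
have [m ms ->] := Mk_ex k (l * a + (1 - l) * b) ne.
have -> : Fk k m (l * a + (1 - l) * b) = l * Fk k m a + (1 - l) * Fk k m b.
  by rewrite /Fk; ring.
apply: lerD; first by rewrite ler_wpM2l // Mk_le.
by rewrite ler_wpM2l ?subr_ge0 // Mk_le.
Qed.

End LinesR2.
Section LinesQ.
Variable (T : eqType) (s : seq T) (x y : T -> nat).
Local Notation LfQ := (@Lf T x y rat).
Local Notation LfR := (@Lf T x y RR).
Local Notation actQ := (@act T s x y rat).
Local Notation actR := (@act T s x y RR).
Local Notation brkQ := (@brk T s x y rat).
Local Notation brkR := (@brk T s x y RR).
Local Notation SvQ := (@Sv T x y rat).
Local Notation SvR := (@Sv T x y RR).

Definition cands : seq rat := [seq @cross T x y rat m n | m <- s, n <- s].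
Definition Rs : seq rat :=
  sort <=%R (undup [seq r <- cands | (0 < r < 1) && brkQ r]).

Lemma Lf_ratr m (r : rat) : LfR m (ratr r) = ratr (LfQ m r).
Proof. by rewrite /Lf !(rmorphD, rmorphM, rmorphN, rmorph1, rmorph_nat). Qed.

Lemma Sv_ratr m : SvR m = ratr (SvQ m).
Proof. by rewrite /Sv !(rmorphD, rmorphN, rmorph_nat). Qed.

Lemma act_ratr (r : rat) m : actR (ratr r) m = actQ r m.
Proof. by apply: eq_all => n; rewrite !Lf_ratr ler_rat. Qed.

Lemma brk_ratr (r : rat) : brkR (ratr r) = brkQ r.
Proof.
apply: eq_has => m; apply: eq_has => n.
by rewrite !act_ratr !Sv_ratr (inj_eq (fmorph_inj _)).
Qed.

Lemma cross_ratr m n : @cross T x y RR m n = ratr (@cross T x y rat m n).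
Proof. by rewrite /cross fmorph_div !(rmorphD, rmorphN, Sv_ratr) /Xv !rmorph_nat. Qed.

Lemma Rs_mem r : (r \in Rs) = [&& r \in cands, 0 < r < 1 & brkQ r].
Proof. by rewrite mem_sort mem_undup mem_filter andbC andbA. Qed.

Lemma brk_cands r : brkQ r -> r \in cands.
Proof.
by move/brk_cross => [m [n [ms ns _ ->]]]; rewrite /cands (allpairs_f (@cross T x y rat)).
Qed.

Lemma Rs_sorted : sorted <%R Rs.
Proof. by rewrite /Rs sort_lt_sorted undup_uniq. Qed.

Lemma brkR_Rs (r : RR) : (0 < r < 1 /\ brkR r) <-> r \in [seq ratr q | q <- Rs].
Proof.
split.
  move=> [/andP [r0 r1] b]; have [m [n [ms ns _ e]]] := brk_cross b.
  rewrite e cross_ratr in r0 r1 b *; apply: map_f.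
  rewrite Rs_mem -brk_ratr b andbT brk_cands -?brk_ratr //.
  rewrite ltr0q in r0; rewrite -(rmorph1 (ratr : {rmorphism rat -> RR})) ltr_rat in r1.
  by rewrite r0 r1.
case/mapP => q; rewrite Rs_mem => /and3P [_ /andP [q0 q1] b] ->.
rewrite brk_ratr b; split => //.
by rewrite ltr0q q0 -(rmorph1 (ratr : {rmorphism rat -> RR})) ltr_rat q1.
Qed.

Lemma nll_Rs (r : RR) : s != [::] ->
  ((0 < r < 1 /\ not_locally_linear (@Mf T s x y) r) <-> r \in [seq ratr q | q <- Rs]).
Proof.
move=> ne; rewrite -brkR_Rs; split => [[h1 h2]|[h1 h2]]; split => //.
  by rewrite -nll_brk.
by rewrite nll_brk.
Qed.

End LinesQ.
Section LinesK.
Variable (T : eqType) (s : seq T) (x y : T -> nat).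
Local Notation LfQ := (@Lf T x y rat).
Local Notation actQ := (@act T s x y rat).
Local Notation brkQ := (@brk T s x y rat).
Local Notation SvQ := (@Sv T x y rat).

Lemma natQ (k : nat) : k%:Q = k%:R.
Proof. by []. Qed.

Lemma kcond_kint (k : nat) : (0 < k)%N -> s != [::] ->
  (forall r, (r < k)%N -> exists2 m, m \in s & actQ (r%:R / k%:R) m && actQ (r.+1%:R / k%:R) m)
  <-> (forall q, q \in @Rs T s x y -> exists z : int, k%:Q * q = z%:~R).
Proof.
move=> k0 ne; have kpos : (0 : rat) < k%:R by rewrite ltr0n.
split.
  move=> kc q; rewrite Rs_mem => /and3P [_ /andP [q0 q1] bq].
  set z := Num.floor (k%:R * q).
  case: (eqVneq (z%:~R) (k%:R * q)) => [e|zne]; first by exists z; rewrite natQ e.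
  exfalso.
  have zlt : z%:~R < k%:R * q by rewrite lt_def eq_sym zne floor_le.
  have zgt : k%:R * q < (z + 1)%:~R by apply: floorD1_gt.
  have z0 : 0 <= z by rewrite floor_ge0 mulr_ge0 // ltW.
  have [r zr] : exists r : nat, z = r%:Z by exists `|z|%N; rewrite gez0_abs.
  have rk : (r < k)%N.
    have : z%:~R < (k%:Z)%:~R :> rat.
      apply: (lt_trans zlt); rewrite [X in _ < X]/= -[X in _ < X]mulr1.
      by rewrite ltr_pM2l.
    by rewrite ltr_int zr ltz_nat.
  have [m ms /andP [am bm]] := kc r rk.
  have e1 : z + 1 = r.+1%:Z by rewrite zr -addn1 PoszD.
  rewrite e1 in zgt; rewrite zr in zlt.
  have {}zgt : k%:R * q < r.+1%:R := zgt.
  have {}zlt : r%:R < k%:R * q := zlt.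
  have aq : r%:R / k%:R < q by rewrite ltr_pdivrMr // mulrC.
  have qb : q < r.+1%:R / k%:R by rewrite ltr_pdivlMr // mulrC.
  have amq : actQ q m by apply: (act_conv (ltW aq) (ltW qb)).
  case/hasP: bq => m1 m1s /hasP [n1 n1s /and3P [a1 a2 sd]].
  have [n [ns an snm]] : exists n, [/\ n \in s, actQ q n & SvQ n != SvQ m].
    case: (eqVneq (SvQ m1) (SvQ m)) => [e|ne1]; last by exists m1.
    by exists n1; split => //; rewrite -e eq_sym.
  have eqL := act_eq an amq ns ms.
  case: (ltrgtP (SvQ n) (SvQ m)) => hs; last by rewrite hs eqxx in snm.
    have := allP bm n ns; rewrite -subr_ge0 (Lf_diff _ _ _ _ _ q) eqL subrr add0r.
    by rewrite nmulr_lge0 ?subr_lt0 // subr_le0 leNgt qb.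
  have := allP am n ns; rewrite -subr_ge0 (Lf_diff _ _ _ _ _ q) eqL subrr add0r.
  by rewrite pmulr_lge0 ?subr_gt0 // subr_ge0 leNgt aq.
move=> ki r rk.
set a := r%:R / k%:R; set b := r.+1%:R / k%:R.
case h: (has (fun m => actQ a m && actQ b m) s).
  by case/hasP: h => m ms hm; exists m.
exfalso.
have ab : a < b by rewrite ltr_pM2r ?invr_gt0 // ltr_nat.
have [q [/andP [aq qb] bq]] := brk_between ab ne (hasPn (negbT h)).
have q0 : 0 < q by apply: le_lt_trans aq; rewrite /a divr_ge0.
have q1 : q < 1.
  apply: (lt_le_trans qb); rewrite /b ler_pdivrMr // mul1r ler_nat //.
have qR : q \in @Rs T s x y by rewrite Rs_mem brk_cands // q0 q1 bq.
have [z ez] := ki q qR.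
rewrite natQ in ez.
have h1 : (r%:Z)%:~R < z%:~R :> rat.
  by rewrite -ez /= mulrC -ltr_pdivrMr.
have h2 : z%:~R < (r%:Z + 1)%:~R :> rat.
  have -> : (r%:Z + 1)%:~R = r.+1%:R :> rat by rewrite intrD -natr1.
  by rewrite -ez mulrC -ltr_pdivlMr.
rewrite ltr_int in h1; rewrite ltr_int in h2.
lia.
Qed.

End LinesK.
Lemma nth_between (xs : seq RR) i z : sorted <%R xs -> (i.+1 < size xs)%N ->
  nth 0 xs i < z -> z < nth 0 xs i.+1 -> z \notin xs.
Proof.
move=> so isz h1 h2; apply/negP => /(nthP 0) [j jlt ej].
have sle : sorted <=%R xs by move: so; rewrite lt_sorted_uniq_le => /andP [].
have ilt : (i < size xs)%N by apply: ltnW.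
case: (leqP j i) => ji.
  have := sorted_leq_nth le_trans lexx 0 sle j i jlt ilt ji.
  by rewrite ej leNgt h1.
have := sorted_leq_nth le_trans lexx 0 sle i.+1 j isz jlt ji.
by rewrite ej leNgt h2.
Qed.

Section LinesPL.
Variable (T : eqType) (s : seq T) (x y : T -> nat).
Local Notation LfR := (@Lf T x y RR).
Local Notation actR := (@act T s x y RR).
Local Notation brkR := (@brk T s x y RR).
Local Notation Mf := (@Mf T s x y).
Local Notation Mk := (@Mk T s x y).

Lemma Mk_pl (k : nat) : (0 < k)%N -> s != [::] -> piecewise_linear (Mk k) 0 k%:R.
Proof.
move=> k0 ne; have kpos : (0 : RR) < k%:R by rewrite ltr0n.
pose l : seq RR := [seq k%:R * ratr q | q <- @Rs T s x y].
have lR z : z \in l -> 0 < z < k%:R.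
  case/mapP => q; rewrite Rs_mem => /and3P [_ /andP [q0 q1] _] ->.
  rewrite pmulr_rgt0 ?ltr0q // q0 /= -[X in _ < X]mulr1 ltr_pM2l //.
  by rewrite -(rmorph1 (ratr : {rmorphism rat -> RR})) ltr_rat.
have lso : sorted <%R l.
  apply: (@homo_sorted _ _ (fun q : rat => (k%:R * ratr q : RR)) <%R <%R _ _ (@Rs_sorted T s x y)).
  by move=> a b ab /=; rewrite ltr_pM2l // ltr_rat.
pose xs : seq RR := 0 :: rcons l k%:R.
have xsR z : z \in xs -> 0 <= z <= k%:R.
  rewrite inE mem_rcons inE => /orP [/eqP ->|/orP [/eqP ->|/lR /andP [h1 h2]]].
  - by rewrite lexx ltW.
  - by rewrite lexx ltW.
  - by rewrite !ltW.
have xso : sorted <%R xs.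
  rewrite /xs /= rcons_path (path_sortedE lt_trans) lso andbT.
  apply/andP; split; first by apply/allP => z /lR /andP [].
  have : last 0 l \in 0 :: l by apply: mem_last.
  by rewrite inE => /orP [/eqP ->|/lR /andP []].
exists xs; split => //=; first by rewrite last_rcons.
move=> i isz.
set a := nth 0 xs i; set b := nth 0 xs i.+1.
have ilt : (i < size xs)%N by apply: ltnW.
have ab : a < b := sorted_ltn_nth lt_trans 0 xso i i.+1 ilt isz (ltnSn i).
have [a0 ak] : 0 <= a /\ a <= k%:R by apply/andP/xsR/mem_nth.
have [b0 bk] : 0 <= b /\ b <= k%:R by apply/andP/xsR/mem_nth.
have ab' : a / k%:R < b / k%:R by rewrite ltr_pM2r // invr_gt0.
case h: (has (fun m => actR (a / k%:R) m && actR (b / k%:R) m) s); last first.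
  exfalso.
  have [r [/andP [ar rb] br]] := brk_between ab' ne (hasPn (negbT h)).
  have r0 : 0 < r by apply: le_lt_trans ar; rewrite divr_ge0 // ltW.
  have r1 : r < 1 by apply: (lt_le_trans rb); rewrite ler_pdivrMr // mul1r.
  have : r \in [seq ratr q | q <- @Rs T s x y] by apply/brkR_Rs; rewrite r0 r1.
  case/mapP => q qR rq.
  have : k%:R * r \in xs by rewrite /xs inE mem_rcons inE rq (map_f (fun q : rat => (k%:R * ratr q : RR)) qR) !orbT.
  apply/negP; apply: (nth_between xso isz).
    by rewrite mulrC -ltr_pdivrMr.
  by rewrite mulrC -ltr_pdivlMr.
case/hasP: h => m ms /andP [am bm].
exists ((y m)%:R - (x m)%:R), (k%:R * (x m)%:R) => z /andP [az zb].
have amz : actR (z / k%:R) m.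
  by apply: (act_conv _ _ am bm); rewrite ler_pM2r // invr_gt0.
rewrite Mk_scale // (act_Mf ms amz) -Fk_Lf // /Fk; ring.
Qed.

End LinesPL.
Lemma kint_den (k : nat) (x : rat) :
  (exists z : int, k%:Q * x = z%:~R) <-> (`|denq x| %| k)%N.
Proof.
split.
  case=> z e.
  have e1 : ((k%:Z * numq x)%:~R : rat) = (z * denq x)%:~R.
    by rewrite !intrM numqE -e mulrA.
  have e2 : (k%:Z * numq x = z * denq x) by apply: (intr_inj e1).
  have : (denq x %| numq x * k%:Z)%Z by rewrite mulrC e2 dvdz_mull ?dvdzz.
  rewrite Gauss_dvdzr; first by [].
  by rewrite /coprimez /gcdz gcdnC; move/eqP: (coprime_num_den x) => ->.
case/dvdnP => t et; exists (t%:Z * numq x).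
have dpos : 0 < denq x by [].
rewrite et PoszM !intrM numqE gez0_abs ?ltW //; ring.
Qed.

Lemma lcm_dvd (l : seq rat) (k : nat) :
  (\big[lcmn/1%N]_(x <- l) `|denq x|%N %| k)%N = all (fun x => `|denq x| %| k)%N l.
Proof.
elim: l => [|a l IH]; first by rewrite big_nil dvd1n.
by rewrite big_cons dvdn_lcm IH.
Qed.

Lemma lcm_pos (l : seq rat) : (0 < \big[lcmn/1%N]_(x <- l) `|denq x|%N)%N.
Proof.
elim: l => [|a l IH]; first by rewrite big_nil.
by rewrite big_cons lcmn_gt0 IH andbT absz_gt0 denq_neq0.
Qed.
Lemma kap_inj k : (0 < k)%N -> injective (kap k).
Proof.
move=> k0 m m' e; apply: mnm3P.
- by have := congr1 (fun z : 'X_{1..3} => z vt) e; rewrite !mnmE /vt inordK.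
- by have := congr1 (fun z : 'X_{1..3} => z vs) e; rewrite !mnmE /vs inordK.
have := congr1 (fun z : 'X_{1..3} => z (ve 0)) e; rewrite !mnmE /ve inordK //=.
by move/eqP; rewrite eqn_mul2r eqn0Ngt k0 /= => /eqP.
Qed.

Lemma kap_vs k m : kap k m vs = m vs.
Proof. by rewrite mnmE /vs inordK. Qed.
Lemma kap_ve0 k m : kap k m (ve 0) = (m (ve 0) * k)%N.
Proof. by rewrite mnmE /ve inordK. Qed.

Lemma Db_E k (f g : {mpoly CC[3]}) :
  Disc (bchange k f) (bchange k g) = mimg (kap k) (Disc f g).
Proof.
have -> : Disc (bchange k f) (bchange k g) = bchange k (Disc f g).
  by rewrite /Disc /bchange rmorphD (rmorphM _ 4%:R (f ^+ 3)) (rmorphM _ 27%:R (g ^+ 2)) !rmorphXn !rmorph_nat.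
rewrite /bchange -{1}[Disc f g](@mimg_id 3).
by rewrite (comp_mimg _ _ (@comp_bchange k)).
Qed.

Section Main.
Variables (D : {mpoly CC[3]}) (P p : nat).
Hypothesis HD : D != 0.
Hypothesis Hw : forall m, m \in msupp D -> wcond 12 P m.
Hypothesis Hp : (p < P)%N.

Local Notation s := (msupp D).
Definition xf (m : 'X_{1..3}) := (Ew 12 m p - nord D P p)%N.
Definition yf (m : 'X_{1..3}) := (Ew 12 m p.+1 - nord D P p.+1)%N.

Lemma s_ne : s != [::].
Proof. by rewrite msupp_eq0. Qed.

Lemma Hw_id : forall m, m \in msupp D -> wcond 12 P (id m).
Proof. exact: Hw. Qed.

Lemma nord0_le q m : (q <= P)%N -> m \in s -> (nord D P q <= Ew 12 m q)%N.
Proof. by move=> qP ms; have := nord_le (@inj_id _) Hw_id qP ms; rewrite mimg_id. Qed.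

Lemma nord0_ex q : (q <= P)%N -> exists2 m, m \in s & Ew 12 m q = nord D P q.
Proof. by move=> qP; have := nord_ex (@inj_id _) HD Hw_id qP; rewrite mimg_id. Qed.

Lemma Dprime0_supp z : z \in msupp (Dprime D P) <-> exists2 m, m \in s & z = psiP D id P m.
Proof. by have := Dprime_supp (@inj_id _) HD Hw_id z; rewrite mimg_id. Qed.

Lemma psiP0_ve m q : (q <= P)%N -> psiP D id P m (ve q) = (Ew 12 m q - nord D P q)%N.
Proof. by move=> qP; rewrite psiP_ve // mimg_id. Qed.

Lemma Mbar_Mk k : Mbar D P p k = Mk s xf yf k.
Proof.
apply: functional_extensionality => z; rewrite /Mbar /Mk; apply: rminseq_eq_mem.
  have [m0 m0s _] := nord0_ex (leq0n P).
  have : psiP D id P m0 \in msupp (Dprime D P) by apply/Dprime0_supp; exists m0.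
  by case: (msupp (Dprime D P)).
move=> w; apply/mapP/mapP => [[z' /Dprime0_supp [m ms ->] ->]|[m ms ->]].
  exists m => //; rewrite /Fk !psiP0_ve //; exact: ltnW.
exists (psiP D id P m); first by apply/Dprime0_supp; exists m.
rewrite /Fk !psiP0_ve //; exact: ltnW.
Qed.

Lemma eps_pos (n : nat) (Z : {mpoly CC[n]}) (u v : 'I_n) :
  (exists2 z, z \in msupp Z & z v = 0%N) ->
  (forall z, z \in msupp Z -> (0 < z u)%N || (0 < z v)%N) ->
  (0 < minseq [seq (z : 'X_{1..n}) u | z <- msupp Z & (z : 'X_{1..n}) v == 0%N])%N.
Proof.
move=> [z0 z0s e0] H.
have ne : [seq (z : 'X_{1..n}) u | z <- msupp Z & (z : 'X_{1..n}) v == 0%N] != [::].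
  apply/eqP => e; have : z0 u \in [seq (z : 'X_{1..n}) u | z <- msupp Z & (z : 'X_{1..n}) v == 0%N].
    by apply: map_f; rewrite mem_filter e0 eqxx.
  by rewrite e.
case/mapP: (minseq_mem ne) => z; rewrite mem_filter => /andP [/eqP ev zs] ->.
by have := H z zs; rewrite ev ltnn orbF.
Qed.

Lemma part1 : special_fiber D P p -> (0 < eps0 D P p)%N /\ (0 < eps1 D P p)%N.
Proof.
move=> sf; split; apply: eps_pos.
- have [m ms e] := nord0_ex Hp.
  exists (psiP D id P m); first by apply/Dprime0_supp; exists m.
  by rewrite psiP0_ve // e subnn.
- by move=> z zs; apply: sf.
- have [m ms e] := nord0_ex (ltnW Hp).
  exists (psiP D id P m); first by apply/Dprime0_supp; exists m.
  by rewrite psiP0_ve // ?e ?subnn // ltnW.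
- by move=> z zs; rewrite orbC; apply: sf.
Qed.

Lemma M0 : Mbar D P p 1 0 = 0.
Proof.
rewrite Mbar_Mk /Mk; apply: rminseq_uniq.
  have [m ms e] := nord0_ex (ltnW Hp).
  apply/mapP; exists m => //; rewrite /Fk /xf e subnn; ring.
move=> w /mapP [m ms ->]; rewrite /Fk subr0 mulr1n mul1r mul0r addr0; exact: ler0n.
Qed.

Lemma M1 : Mbar D P p 1 1 = 0.
Proof.
rewrite Mbar_Mk /Mk; apply: rminseq_uniq.
  have [m ms e] := nord0_ex Hp.
  apply/mapP; exists m => //; rewrite /Fk /yf e subnn; ring.
move=> w /mapP [m ms ->]; rewrite /Fk mulr1n subrr mul0r add0r mul1r; exact: ler0n.
Qed.

Lemma M_Mf : Mbar D P p 1 = Mf s xf yf.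
Proof.
rewrite Mbar_Mk; apply: functional_extensionality => z.
by rewrite Mk_scale //= ?s_ne // mul1r divr1.
Qed.

End Main.
Section Main2.
Variables (D : {mpoly CC[3]}) (P p : nat).
Hypothesis HD : D != 0.
Hypothesis Hw : forall m, m \in msupp D -> wcond 12 P m.
Hypothesis Hp : (p < P)%N.

Local Notation s := (msupp D).
Local Notation xf := (xf D P p).
Local Notation yf := (yf D P p).

Definition Lnat (k r : nat) (m : 'X_{1..3}) := ((k - r) * xf m + r * yf m)%N.
Definition Cr (k r : nat) := ((k - r) * nord D P p + r * nord D P p.+1)%N.

Lemma Hw_kap k : (0 < k)%N -> forall m, m \in s -> wcond 12 (k * P) (kap k m).
Proof.
move=> k0 m ms; have := Hw ms; rewrite /wcond kap_ve0 kap_vs => h.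
have := leq_mul (leqnn k) h; rewrite mulnDr.
by rewrite mulnCA (mulnC (m (ve 0))) -mulnA.
Qed.

Lemma Ew_kap k r m : (r <= k)%N -> m \in s ->
  Ew 12 (kap k m) (k * p + r) = (Cr k r + Lnat k r m)%N.
Proof.
move=> rk ms.
have w1 := wcond_le (ltnW Hp) (Hw ms); have w2 := wcond_le Hp (Hw ms).
have n1 := nord0_le Hw (ltnW Hp) ms; have n2 := nord0_le Hw Hp ms.
have -> : (Cr k r + Lnat k r m = (k - r) * Ew 12 m p + r * Ew 12 m p.+1)%N.
  by rewrite /Cr /Lnat /xf /yf addnACA -!mulnDr !subnKC.
move: w1 w2; rewrite /Ew /wcond kap_ve0 kap_vs.
move: (m (ve 0)) (m vs) => a b w1 w2.
have [t ->] : exists t, k = (t + r)%N by exists (k - r)%N; rewrite subnK.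
rewrite addnK.
have eA := subnK w1; have eB := subnK w2.
move: (a + p * b - 12 * p)%N (a + p.+1 * b - 12 * p.+1)%N eA eB => A B eA eB.
have key : (t * A + r * B + 12 * ((t + r) * p + r) = a * (t + r) + ((t + r) * p + r) * b)%N.
  have : (t * (A + 12 * p) + r * (B + 12 * p.+1) = a * (t + r) + ((t + r) * p + r) * b)%N.
    rewrite eA eB -(addn1 p) !mulnDr !mulnDl ?muln1; lia.
  rewrite -(addn1 p) !mulnDr !mulnDl ?muln1; lia.
rewrite -key addnK //.
Qed.

Local Notation Db k := (mimg (kap k) D).

Lemma kP_ok k r : (0 < k)%N -> (r <= k)%N -> (k * p + r <= k * P)%N.
Proof. move=> k0 rk; have : (k * p.+1 <= k * P)%N by rewrite leq_mul2l Hp orbT. rewrite mulnS; lia. Qed.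

Lemma nordb k r : (0 < k)%N -> (r <= k)%N ->
  (exists2 m0, m0 \in s & nord (Db k) (k * P) (k * p + r) = (Cr k r + Lnat k r m0)%N) /\
  (forall m, m \in s -> (nord (Db k) (k * P) (k * p + r) <= Cr k r + Lnat k r m)%N).
Proof.
move=> k0 rk; split.
  have [m0 m0s e] := nord_ex (kap_inj k0) HD (Hw_kap k0) (kP_ok k0 rk).
  by exists m0 => //; rewrite -e Ew_kap.
move=> m ms; rewrite -Ew_kap //.
exact: (nord_le (kap_inj k0) (Hw_kap k0) (kP_ok k0 rk) ms).
Qed.

Lemma Fk_nat k r m : (r <= k)%N -> Fk xf yf k m r%:R = (Lnat k r m)%:R.
Proof. by move=> rk; rewrite /Fk /Lnat natrD !natrM (natrB _ rk). Qed.

Lemma part2 k r : (0 < k)%N -> (r <= k)%N ->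
  (nord (Db k) (k * P) (k * p + r))%:R = (Cr k r)%:R + Mbar D P p k r%:R :> RR.
Proof.
move=> k0 rk; have [[m0 m0s e] H] := nordb k0 rk.
rewrite (Mbar_Mk HD Hw Hp) /Mk.
rewrite (@rminseq_uniq _ (Lnat k r m0)%:R).
- by rewrite e natrD.
- by apply/mapP; exists m0 => //; rewrite Fk_nat.
move=> w /mapP [m ms ->]; rewrite Fk_nat // ler_nat.
by have := H m ms; rewrite e leq_add2l.
Qed.

Lemma actQ_Lnat k r m : (0 < k)%N -> (r <= k)%N ->
  act s xf yf (r%:R / k%:R : rat) m = all (fun n => Lnat k r m <= Lnat k r n)%N s.
Proof.
move=> k0 rk; apply: eq_all => n.
have kpos : (0 : rat) < k%:R by rewrite ltr0n.
have LE (m' : 'X_{1..3}) : Lf xf yf m' (r%:R / k%:R : rat) = (Lnat k r m')%:R / k%:R.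
  rewrite /Lf /Lnat natrD !natrM (natrB _ rk); field.
  by rewrite pnatr_eq0 -lt0n.
by rewrite !LE ler_pM2r ?invr_gt0 // ler_nat.
Qed.

Lemma exp0 k r m : (0 < k)%N -> (r <= k)%N -> m \in s ->
  (psiP D (kap k) (k * P) m (ve (k * p + r)) == 0%N) = act s xf yf (r%:R / k%:R : rat) m.
Proof.
move=> k0 rk ms; have [[m0 m0s e] H] := nordb k0 rk.
rewrite psiP_ve ?kP_ok // Ew_kap // e actQ_Lnat // subn_eq0 leq_add2l.
apply/idP/allP => [h n ns|h]; last exact: h.
by apply: leq_trans h _; have := H n ns; rewrite e leq_add2l.
Qed.

Lemma no_sf k r : (0 < k)%N -> (r < k)%N ->
  (~ special_fiber (Db k) (k * P) (k * p + r)) <->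
  (exists2 m, m \in s & act s xf yf (r%:R / k%:R : rat) m && act s xf yf (r.+1%:R / k%:R : rat) m).
Proof.
move=> k0 rk; have rk' := ltnW rk.
have e1 m : m \in s -> (psiP D (kap k) (k * P) m (ve (k * p + r).+1) == 0%N)
   = act s xf yf (r.+1%:R / k%:R : rat) m.
  by move=> ms; rewrite -addnS exp0.
split.
  move=> nsf; case h: (has (fun m => act s xf yf (r%:R / k%:R : rat) m && act s xf yf (r.+1%:R / k%:R : rat) m) s).
    by case/hasP: h => m ms hm; exists m.
  exfalso; apply: nsf => z /(Dprime_supp (kap_inj k0) HD (Hw_kap k0)) [m ms ->].
  move/hasPn: h => /(_ m ms); rewrite -exp0 // -e1 // !lt0n.
  by case: eqP; case: eqP.
case=> m ms /andP [a1 a2] sf.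
have zin : psiP D (kap k) (k * P) m \in msupp (Dprime (mimg (kap k) D) (k * P)).
  by apply/(Dprime_supp (kap_inj k0) HD (Hw_kap k0)); exists m.
have := sf _ zin.
rewrite -exp0 // in a1; rewrite -e1 // in a2.
by rewrite (eqP a1) (eqP a2).
Qed.

End Main2.
Section Bridge.
Variables (D : {mpoly CC[3]}) (P p : nat).
Hypothesis HD : D != 0.
Hypothesis Hw : forall m, m \in msupp D -> wcond 12 P m.
Hypothesis Hp : (p < P)%N.

Lemma bridge k : (0 < k)%N ->
  (forall pb : nat, (k * p <= pb < k * p.+1)%N ->
     ~ special_fiber (mimg (kap k) D) (k * P) pb) <->
  (forall r, (r < k)%N -> exists2 m, m \in msupp D &
     act (msupp D) (xf D P p) (yf D P p) (r%:R / k%:R : rat) m &&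
     act (msupp D) (xf D P p) (yf D P p) (r.+1%:R / k%:R : rat) m).
Proof.
move=> k0; have e : (k * p.+1 = k * p + k)%N by rewrite mulnS addnC.
split.
  move=> H r rk; apply/(no_sf HD Hw Hp k0 rk); apply: H.
  by rewrite e leq_addr ltn_add2l.
move=> H pb /andP [h1 h2].
have rk : (pb - k * p < k)%N by rewrite e in h2; lia.
have -> : pb = (k * p + (pb - k * p))%N by rewrite subnKC.
by apply/(no_sf HD Hw Hp k0 rk); apply: H.
Qed.

End Bridge.

Lemma kint_iff (l : seq rat) (k : nat) :
  (forall x, x \in l -> exists z : int, k%:Q * x = z%:~R) <->
  (\big[lcmn/1%N]_(x <- l) `|denq x|%N %| k)%N.
Proof.
rewrite lcm_dvd; split.
  by move=> H; apply/allP => x xl; apply/kint_den; apply: H.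
by move/allP => H x xl; apply/kint_den; apply: H.
Qed.

Theorem lemma2 (f g : {mpoly CC[3]}) (P p : nat)
  (* f, g homogeneous in (s,t) of degrees 8 and 12 *)
  (Hf : st_homog f 8) (Hg : st_homog g 12)
  (* not both a >= 4 and b >= 6 (a = oo if f = 0, b = oo if g = 0) *)
  (Hab : ~ ((f = 0 \/ (4 <= sord f)%N) /\ (g = 0 \/ (6 <= sord g)%N)))
  (* the Weierstrass model is not everywhere singular *)
  (HD : Disc f g != 0)
  (* 3-fold orders (4+alpha, 6+beta, 12+gamma) with alpha = 0 or beta = 0,  *)
  (* persisting under all base changes u |-> u^l  (Classes 1-4)            *)
  (Hcls : forall l : nat, (0 < l)%N ->
     us_ord_ge (bchange l f) 4 /\ us_ord_ge (bchange l g) 6 /\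
     us_ord_ge (Disc (bchange l f) (bchange l g)) 12 /\
     (us_ord_eq (bchange l f) 4 \/ us_ord_eq (bchange l g) 6))
  (* P is the first number of blowups at which the condition holds *)
  (HP : condP f g P)
  (HPmin : forall q : nat, (q < P)%N -> ~ condP f g q)
  (* standing assumption *)
  (Hstand :
     (exists i, (i < 4 - sord f)%N /\ Fco f 0 i != 0 /\ mu f P i = 0%N)
     \/ (exists j, (j < 6 - sord g)%N /\ Gco g 0 j != 0 /\ nu g P j = 0%N))
  (Hp : (p < P)%N) :
  let D := Disc f g in
  let M := Mbar D P p 1 in
  (* (1) *)
  (special_fiber D P p -> (0 < eps0 D P p)%N /\ (0 < eps1 D P p)%N)
  /\
  (forall k : nat, (0 < k)%N ->
     let Db := Disc (bchange k f) (bchange k g) in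
     (* (2) *)
     (forall r : nat, (r <= k)%N ->
        (nord Db (k * P) (k * p + r))%:R
        = ((k - r) * nord D P p + r * nord D P p.+1)%N%:R + Mbar D P p k r%:R)
     (* (3), first part *)
     /\ piecewise_linear (Mbar D P p k) 0 k%:R
     /\ concave_on (Mbar D P p k) 0 k%:R
     /\ (forall r : RR, 0 <= r <= 1 -> Mbar D P p k (k%:R * r) = k%:R * M r))
  /\ M 0 = 0 /\ M 1 = 0
  /\
  (* (3), the non-linearity points R_1 < ... < R_(N-1) are rational, and (4) *)
  (exists Rs : seq rat,
     let kint (k : nat) := forall x, x \in Rs -> exists z : int, k%:Q * x = z%:~R in
     let k0 := \big[lcmn/1%N]_(x <- Rs) `|denq x|%N in
     [/\ sorted <%R Rs,
         (forall r : RR, (0 < r < 1 /\ not_locally_linear M r)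
                         <-> r \in [seq ratr x | x <- Rs]),
         (forall k : nat, (0 < k)%N ->
            (forall pb : nat, (k * p <= pb < k * p.+1)%N ->
               ~ special_fiber (Disc (bchange k f) (bchange k g)) (k * P) pb)
            <-> kint k),
         [/\ (0 < k0)%N, kint k0 & forall k : nat, (0 < k)%N -> kint k -> (k0 <= k)%N] &
         (forall k : nat, (0 < k)%N ->
            (forall pb : nat, (k * p <= pb < k * p.+1)%N ->
               ~ special_fiber (Disc (bchange k f) (bchange k g)) (k * P) pb)
            <-> (k0 %| k)%N)]).
Proof.
cbv zeta.
have HDw := D_weight Hf Hg HPmin.
have sne := s_ne HD.
split; first exact: (part1 HD HDw Hp).
split.
  move=> k k0; rewrite Db_E.
  split; first by move=> r rk; exact: (part2 HD HDw Hp k0 rk).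
  split; first by rewrite (Mbar_Mk HD HDw Hp); exact: Mk_pl.
  split; first by rewrite (Mbar_Mk HD HDw Hp); exact: Mk_concave.
  move=> r _; rewrite (M_Mf HD HDw Hp) (Mbar_Mk HD HDw Hp) Mk_scale //.
  congr (_ * Mf _ _ _ _); field.
  by rewrite pnatr_eq0 -lt0n.
split; first exact: (M0 HD HDw Hp).
split; first exact: (M1 HD HDw Hp).
exists (Rs (msupp (Disc f g)) (xf (Disc f g) P p) (yf (Disc f g) P p)).
have KI k : (0 < k)%N ->
   (forall pb : nat, (k * p <= pb < k * p.+1)%N ->
      ~ special_fiber (Disc (bchange k f) (bchange k g)) (k * P) pb) <->
   (forall x, x \in Rs (msupp (Disc f g)) (xf (Disc f g) P p) (yf (Disc f g) P p) ->
      exists z : int, k%:Q * x = z%:~R).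
  move=> k0; rewrite Db_E; rewrite (bridge HD HDw Hp k0).
  exact: (kcond_kint _ _ k0 sne).
split.
- exact: Rs_sorted.
- by move=> r; rewrite (M_Mf HD HDw Hp); exact: nll_Rs.
- exact: KI.
- split; first exact: lcm_pos.
    by apply/kint_iff; exact: dvdnn.
  move=> k k0 /kint_iff h; exact: dvdn_leq.
- by move=> k k0; rewrite (KI k k0) kint_iff.
Qed.
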